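(* Let $a>0$. Then $$\int_0^1 f_a(x)\,dx=\frac{1}{1+a}\Bigl[1-\frac{a\pi}{a+1}\cot\frac{a\pi}{a+1}\Bigr]$$ and $$\int_0^{a/(a+1)} f_a(x)\,dx=\frac{1}{2(1+a)^2}\Bigl[1+a+a^2-a\pi\cot\frac{a\pi}{a+1}\Bigr].$$
   Context: For $a>0$ let $\phi_a(x)=x^a-x^{a+1}$ on $[0,1]$, strictly increasing on $[0,x_0]$ and strictly decreasing on $[x_0,1]$ with $x_0=a/(a+1)$. Let $l_a,r_a$ be the restrictions of $\phi_a$ to $[0,x_0]$ and $[x_0,1]$. Define $f_a(x)=r_a^{-1}(\phi_a(x))$ for $0\le x\le x_0$ and $f_a(x)=l_a^{-1}(\phi_a(x))$ for $x_0\le x\le1$. *)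

(* Defs.v *)
From Stdlib Require Import Reals ClassicalEpsilon.
From Coquelicot Require Import Coquelicot.
Open Scope R_scope.

Definition rpow (x a : R) : R := if Rle_dec x 0 then 0 else Rpower x a.

Definition phi_a (a x : R) : R := rpow x a - rpow x (a + 1).

Definition x0 (a : R) : R := a / (a + 1).

Definition r_inv (a t : R) : R :=
  epsilon (inhabits 0) (fun y => x0 a <= y <= 1 /\ phi_a a y = t).

Definition l_inv (a t : R) : R :=
  epsilon (inhabits 0) (fun y => 0 <= y <= x0 a /\ phi_a a y = t).

(* f_a(x) = r_a^{-1}(phi_a x) on [0,x0], l_a^{-1}(phi_a x) on [x0,1]
   (both give x0 at x = x0). *)
Definition f_a (a x : R) : R :=
  if Rle_dec x (x0 a) then r_inv a (phi_a a x) else l_inv a (phi_a a x).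

Definition cot (x : R) : R := cos x / sin x.

(* Main.v *)
Require Import Defs.
From Stdlib Require Import Reals Lra Lia Psatz ClassicalEpsilon.
From Coquelicot Require Import Coquelicot.
Open Scope R_scope.

Lemma rpow_pos x c : 0 < x -> rpow x c = exp (c * ln x).
Proof. intros H; unfold rpow, Rpower; destruct (Rle_dec x 0); [lra|reflexivity]. Qed.

Lemma rpow_le0 x c : x <= 0 -> rpow x c = 0.
Proof. intros H; unfold rpow; destruct (Rle_dec x 0); [reflexivity|lra]. Qed.

Lemma rpow_gt0 x c : 0 < x -> 0 < rpow x c.
Proof. intros H; rewrite rpow_pos; auto; apply exp_pos. Qed.

Lemma rpow_ge0 x c : 0 <= rpow x c.
Proof. destruct (Rle_dec x 0). rewrite rpow_le0; lra. left; apply rpow_gt0; lra. Qed.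

Lemma rpow_1 c : rpow 1 c = 1.
Proof. rewrite rpow_pos; [|lra]. rewrite ln_1, Rmult_0_r, exp_0; auto. Qed.

Lemma rpow_plus x c d : 0 < x -> rpow x (c + d) = rpow x c * rpow x d.
Proof. intros H; rewrite !rpow_pos; auto. rewrite Rmult_plus_distr_r, exp_plus; auto. Qed.

Lemma rpow_x1 x : 0 < x -> rpow x 1 = x.
Proof. intros H; rewrite rpow_pos; auto. rewrite Rmult_1_l, exp_ln; auto. Qed.

Lemma rpow_cont c x : 0 < c -> continuous (fun t => rpow t c) x.
Proof.
  intros Hc.
  destruct (Rtotal_order x 0) as [Hx|[Hx|Hx]].
  - apply continuity_pt_filterlim.
    apply continuity_pt_ext_loc with (f := fun _ => 0).
    + assert (H: 0 < - x) by lra.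
      exists (mkposreal _ H). intros y Hy. simpl in Hy.
      unfold ball in Hy; simpl in Hy; unfold AbsRing_ball, abs, minus, plus, opp in Hy; simpl in Hy.
      rewrite rpow_le0; auto. apply Rabs_lt_between in Hy. lra.
    + apply continuity_pt_const. intros u v; auto.
  - subst x. apply continuity_pt_filterlim.
    unfold continuity_pt, continue_in, limit1_in, limit_in.
    intros eps Heps.
    assert (Hd : 0 < exp (ln eps / c)) by apply exp_pos.
    exists (exp (ln eps / c)); split; auto. intros y [_ Hy]. simpl in Hy |- *.
    unfold R_dist in *. rewrite rpow_le0 with (x:=0); [|lra].
    rewrite Rminus_0_r in *.
    destruct (Rle_dec y 0) as [Hy0|Hy0].
    + rewrite rpow_le0; auto. rewrite Rabs_R0; auto.
    + rewrite Rabs_pos_eq by (apply rpow_ge0).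
      rewrite Rabs_pos_eq in Hy by lra.
      rewrite rpow_pos by lra.
      rewrite <- (exp_ln eps) by auto.
      apply exp_increasing.
      apply ln_increasing in Hy; [|lra]. rewrite ln_exp in Hy.
      apply Rmult_lt_compat_l with (r := c) in Hy; auto.
      replace (c * (ln eps / c)) with (ln eps) in Hy by (field; lra). lra.
  - apply continuity_pt_filterlim.
    apply continuity_pt_ext_loc with (f := fun t => exp (c * ln t)).
    + exists (mkposreal _ Hx). intros y Hy. simpl in Hy.
      unfold ball in Hy; simpl in Hy; unfold AbsRing_ball, abs, minus, plus, opp in Hy; simpl in Hy.
      apply Rabs_lt_between in Hy. rewrite rpow_pos; auto; lra.
    + apply continuity_pt_filterlim. apply (ex_derive_continuous (fun t => exp (c * ln t))). auto_derive. lra.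
Qed.

Lemma rpow_small c eps : 0 < c -> 0 < eps -> exists d, 0 < d /\ forall t, Rabs t < d -> rpow t c < eps.
Proof.
  intros Hc He. pose proof (rpow_cont c 0 Hc) as H.
  apply continuity_pt_filterlim in H.
  destruct (H eps He) as [d [Hd Hd2]].
  exists d; split; auto. intros t Ht.
  destruct (Req_dec t 0) as [->|Ht0].
  - rewrite rpow_le0; lra.
  - specialize (Hd2 t). simpl in Hd2. unfold R_dist in Hd2.
    rewrite (rpow_le0 0) in Hd2 by lra. rewrite !Rminus_0_r in Hd2.
    assert (Hr: Rabs (rpow t c) < eps) by (apply Hd2; split; [split; [exact I| auto] | auto]).
    apply Rabs_lt_between in Hr; lra.
Qed.

Lemma rpow_derive_pos c x : 0 < x -> is_derive (fun t => rpow t c) x (c * rpow x (c - 1)).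
Proof.
  intros Hx.
  apply is_derive_ext_loc with (f := fun t => exp (c * ln t)).
  - exists (mkposreal _ Hx). intros y Hy. simpl in Hy.
    unfold ball in Hy; simpl in Hy; unfold AbsRing_ball, abs, minus, plus, opp in Hy; simpl in Hy.
    apply Rabs_lt_between in Hy. rewrite rpow_pos; auto; lra.
  - auto_derive; [lra|]. rewrite rpow_pos by lra.
    replace ((c-1) * ln x) with (c * ln x + (- ln x)) by ring.
    rewrite exp_plus, exp_Ropp, exp_ln by lra. field. lra.
Qed.

Lemma rpow_derive0 c : 1 < c -> is_derive (fun t => rpow t c) 0 0.
Proof.
  intros Hc. apply is_derive_Reals. intros eps He.
  destruct (rpow_small (c-1) eps) as [d [Hd Hd2]]; try lra.
  exists (mkposreal _ Hd). intros h Hh0 Hh. simpl in Hh.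
  rewrite Rplus_0_l, (rpow_le0 0) by lra. rewrite Rminus_0_r, Rminus_0_r.
  destruct (Rle_dec h 0).
  - rewrite rpow_le0 by auto. unfold Rdiv; rewrite Rmult_0_l, Rabs_R0; auto.
  - replace c with ((c - 1) + 1) by ring. rewrite rpow_plus, rpow_x1 by lra.
    replace (rpow h (c - 1) * h / h) with (rpow h (c-1)) by (field; auto).
    rewrite Rabs_pos_eq by apply rpow_ge0. apply Hd2; auto.
Qed.

Lemma rpow_RInt01 c : 0 < c -> is_RInt (fun t => rpow t c) 0 1 (1 / (c + 1)).
Proof.
  intros Hc.
  replace (1 / (c+1)) with (minus (/(c+1) * rpow 1 (c+1)) (/(c+1) * rpow 0 (c+1))).
  2:{ rewrite rpow_1, (rpow_le0 0) by lra. unfold minus, plus, opp; simpl. field. lra. }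
  apply (is_RInt_derive (fun t => /(c+1) * rpow t (c+1))).
  - intros x Hx. rewrite Rmin_left, Rmax_right in Hx by lra.
    destruct (Req_dec x 0) as [->|Hx0].
    + rewrite (rpow_le0 0) by lra.
      replace 0 with (/(c+1) * 0) at 2 by ring.
      apply is_derive_scal. apply rpow_derive0. lra.
    + replace (rpow x c) with (/(c+1) * ((c+1) * rpow x (c + 1 - 1))).
      2:{ replace (c+1-1) with c by ring. field. lra. }
      apply is_derive_scal. apply rpow_derive_pos. lra.
  - intros x _. apply rpow_cont; auto.
Qed.

Lemma strict_incr f df l r :
  (forall x, l < x < r -> is_derive f x (df x)) ->
  (forall x, l <= x <= r -> continuity_pt f x) ->
  (forall x, l <= x <= r -> 0 <= df x) ->
  (forall x, l < x < r -> 0 < df x) ->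
  forall x y, l <= x -> x < y -> y <= r -> f x < f y.
Proof.
  intros Hd Hc H0 H1.
  assert (Hle : forall u v, l <= u -> u <= v -> v <= r -> f u <= f v).
  { intros u v Hu Huv Hv. destruct (Req_dec u v) as [->|Hne]; [lra|].
    destruct (MVT_gen f u v df) as [c [Hc1 Hc2]].
    - rewrite Rmin_left, Rmax_right by lra. intros x Hx. apply Hd; lra.
    - rewrite Rmin_left, Rmax_right by lra. intros x Hx. apply Hc; lra.
    - rewrite Rmin_left, Rmax_right in Hc1 by lra.
      assert (0 <= df c) by (apply H0; lra). nra. }
  intros x y Hx Hxy Hy.
  set (m1 := x + (y - x) / 3). set (m2 := x + 2 * (y - x) / 3).
  assert (f m1 < f m2).
  { destruct (MVT_gen f m1 m2 df) as [c [Hc1 Hc2]].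
    - rewrite Rmin_left, Rmax_right by (unfold m1, m2; lra). intros z Hz. apply Hd. unfold m1, m2 in *; lra.
    - rewrite Rmin_left, Rmax_right by (unfold m1, m2; lra). intros z Hz. apply Hc. unfold m1, m2 in *; lra.
    - rewrite Rmin_left, Rmax_right in Hc1 by (unfold m1, m2; lra).
      assert (0 < df c) by (apply H1; unfold m1, m2 in *; lra).
      assert (0 < m2 - m1) by (unfold m1, m2; lra). nra. }
  assert (f x <= f m1) by (apply Hle; unfold m1; lra).
  assert (f m2 <= f y) by (apply Hle; unfold m2; lra).
  lra.
Qed.

Lemma strict_decr f df l r :
  (forall x, l < x < r -> is_derive f x (df x)) ->
  (forall x, l <= x <= r -> continuity_pt f x) ->
  (forall x, l <= x <= r -> df x <= 0) ->
  (forall x, l < x < r -> df x < 0) ->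
  forall x y, l <= x -> x < y -> y <= r -> f y < f x.
Proof.
  intros Hd Hc H0 H1 x y Hx Hxy Hy.
  assert (- f x < - f y); [|lra].
  apply (strict_incr (fun t => - f t) (fun t => - df t) l r); auto.
  - intros z Hz. apply (is_derive_opp f). auto.
  - intros z Hz. apply continuity_pt_opp. auto.
  - intros z Hz. specialize (H0 z Hz). lra.
  - intros z Hz. specialize (H1 z Hz). lra.
Qed.

Section Phi.
Variable a : R.
Hypothesis ha : 0 < a.

Let p := x0 a.

Lemma p_bounds : 0 < p < 1.
Proof. unfold p, x0. split. apply Rdiv_lt_0_compat; lra. apply Rmult_lt_reg_r with (a+1); [lra|]. unfold Rdiv. rewrite Rmult_assoc, Rinv_l by lra. lra. Qed.

Lemma phi_cont x : continuity_pt (phi_a a) x.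
Proof.
  unfold phi_a. apply continuity_pt_minus; apply continuity_pt_filterlim; apply rpow_cont; lra.
Qed.

Lemma phi_cont_all : continuity (phi_a a).
Proof. intro x; apply phi_cont. Qed.

Lemma phi_pos_eq x : 0 < x -> phi_a a x = rpow x a * (1 - x).
Proof. intros Hx. unfold phi_a. rewrite rpow_plus, rpow_x1 by auto. ring. Qed.

Lemma phi_le0 x : x <= 0 -> phi_a a x = 0.
Proof. intros Hx. unfold phi_a. rewrite !rpow_le0 by auto. ring. Qed.

Lemma phi_1 : phi_a a 1 = 0.
Proof. rewrite phi_pos_eq by lra. ring. Qed.

Lemma phi_derive x : 0 < x -> is_derive (phi_a a) x (rpow x (a - 1) * (a - (a + 1) * x)).
Proof.
  intros Hx. unfold phi_a.
  replace (rpow x (a - 1) * (a - (a + 1) * x)) with (a * rpow x (a - 1) - (a+1) * rpow x (a + 1 - 1)).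
  2:{ replace (a + 1 - 1) with ((a - 1) + 1) by ring. rewrite rpow_plus, rpow_x1 by auto. ring. }
  apply (is_derive_minus (fun t => rpow t a) (fun t => rpow t (a+1))); apply rpow_derive_pos; auto.
Qed.

Lemma p_eq : a - (a + 1) * p = 0.
Proof. unfold p, x0. field. lra. Qed.

Lemma phi_incr x y : 0 <= x -> x < y -> y <= p -> phi_a a x < phi_a a y.
Proof.
  pose proof p_bounds as Hp. pose proof p_eq as He.
  apply (strict_incr (phi_a a) (fun t => rpow t (a - 1) * (a - (a + 1) * t)) 0 p).
  - intros z Hz. apply phi_derive. lra.
  - intros z _. apply phi_cont.
  - intros z Hz. apply Rmult_le_pos. apply rpow_ge0. nra.
  - intros z Hz. apply Rmult_lt_0_compat. apply rpow_gt0; lra. nra.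
Qed.

Lemma phi_decr x y : p <= x -> x < y -> y <= 1 -> phi_a a y < phi_a a x.
Proof.
  pose proof p_bounds as Hp. pose proof p_eq as He.
  apply (strict_decr (phi_a a) (fun t => rpow t (a - 1) * (a - (a + 1) * t)) p 1).
  - intros z Hz. apply phi_derive. lra.
  - intros z _. apply phi_cont.
  - intros z Hz. assert (0 <= rpow z (a-1)) by apply rpow_ge0.
    assert (a - (a+1) * z <= 0) by nra. 
    apply Rmult_le_0_l; auto.
  - intros z Hz. assert (0 < rpow z (a-1)) by (apply rpow_gt0; lra).
    assert (a - (a+1) * z < 0) by nra.
    apply Rmult_pos_neg; auto.
Qed.

End Phi.

Definition clamp (l r x : R) := Rmax l (Rmin r x).

Lemma clamp_in l r x : l <= r -> l <= clamp l r x <= r.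
Proof. intros H; unfold clamp, Rmax, Rmin; repeat destruct Rle_dec; lra. Qed.

Lemma clamp_id l r x : l <= x <= r -> clamp l r x = x.
Proof. intros H; unfold clamp, Rmax, Rmin; repeat destruct Rle_dec; lra. Qed.

Lemma clamp_lip l r x y : l <= r -> Rabs (clamp l r x - clamp l r y) <= Rabs (x - y).
Proof.
  intros H; unfold clamp, Rmax, Rmin; repeat destruct Rle_dec;
  unfold Rabs; repeat destruct Rcase_abs; lra.
Qed.

Lemma mono_cont g l r :
  l < r ->
  (forall x y, l <= x -> x < y -> y <= r -> g y < g x) ->
  (forall w, g r <= w <= g l -> exists x, l <= x <= r /\ g x = w) ->
  forall c, continuity_pt (fun x => g (clamp l r x)) c.
Proof.
  intros Hlr Hdec Hsurj c.
  unfold continuity_pt, continue_in, limit1_in, limit_in; simpl; unfold R_dist.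
  intros eps He.
  set (cc := clamp l r c).
  assert (Hcc : l <= cc <= r) by (apply clamp_in; lra).
  assert (Hmono : forall x y, l <= x -> x <= y -> y <= r -> g y <= g x).
  { intros x y Hx Hxy Hy. destruct (Req_dec x y) as [->|]; [lra|]. left; apply Hdec; lra. }
  assert (HL : exists d1, 0 < d1 /\ forall y, l <= y -> y < cc -> cc - y < d1 -> g y < g cc + eps).
  { destruct (Rlt_dec (g cc) (g l)) as [Hlt|Hnlt].
    - set (w1 := Rmin (g cc + eps/2) (g l)).
      assert (Hw1 : g r <= w1 <= g l).
      { assert (g r <= g cc) by (apply Hmono; lra). unfold w1, Rmin; destruct Rle_dec; lra. }
      destruct (Hsurj w1 Hw1) as [x1 [Hx1 Hgx1]].
      assert (Hx1c : x1 < cc).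
      { destruct (Rlt_dec x1 cc); auto. assert (g x1 <= g cc) by (apply Hmono; lra).
        unfold w1, Rmin in Hgx1; destruct Rle_dec; lra. }
      exists (cc - x1); split; [lra|]. intros y Hy1 Hy2 Hy3.
      assert (g y < g x1) by (apply Hdec; lra).
      unfold w1, Rmin in Hgx1; destruct Rle_dec; lra.
    - exists 1; split; [lra|]. intros y Hy1 Hy2 Hy3.
      assert (g cc < g y) by (apply Hdec; lra).
      assert (g y <= g l) by (apply Hmono; lra). lra. }
  assert (HR : exists d2, 0 < d2 /\ forall y, cc < y -> y <= r -> y - cc < d2 -> g cc - eps < g y).
  { destruct (Rlt_dec (g r) (g cc)) as [Hlt|Hnlt].
    - set (w2 := Rmax (g cc - eps/2) (g r)).
      assert (Hw2 : g r <= w2 <= g l).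
      { assert (g cc <= g l) by (apply Hmono; lra). unfold w2, Rmax; destruct Rle_dec; lra. }
      destruct (Hsurj w2 Hw2) as [x2 [Hx2 Hgx2]].
      assert (Hx2c : cc < x2).
      { destruct (Rlt_dec cc x2); auto. assert (g cc <= g x2) by (apply Hmono; lra).
        unfold w2, Rmax in Hgx2; destruct Rle_dec; lra. }
      exists (x2 - cc); split; [lra|]. intros y Hy1 Hy2 Hy3.
      assert (g x2 < g y) by (apply Hdec; lra).
      unfold w2, Rmax in Hgx2; destruct Rle_dec; lra.
    - exists 1; split; [lra|]. intros y Hy1 Hy2 Hy3.
      assert (g y < g cc) by (apply Hdec; lra).
      assert (g r <= g y) by (apply Hmono; lra). lra. }
  destruct HL as [d1 [Hd1 HL]]. destruct HR as [d2 [Hd2 HR]].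
  exists (Rmin d1 d2); split; [apply Rmin_pos; auto|].
  intros x [_ Hx].
  set (y := clamp l r x).
  assert (Hy : l <= y <= r) by (apply clamp_in; lra).
  assert (Hyc : Rabs (y - cc) < Rmin d1 d2).
  { eapply Rle_lt_trans; [apply clamp_lip; lra|]. auto. }
  fold cc. fold y.
  assert (Hm1 := Rmin_l d1 d2). assert (Hm2 := Rmin_r d1 d2).
  destruct (Rtotal_order y cc) as [Hlt|[Heq|Hgt]].
  - assert (g cc < g y) by (apply Hdec; lra).
    assert (g y < g cc + eps).
    { apply HL; try lra. rewrite Rabs_minus_sym in Hyc. rewrite Rabs_pos_eq in Hyc by lra. lra. }
    rewrite Rabs_pos_eq by lra. lra.
  - rewrite Heq, Rminus_diag, Rabs_R0; auto.
  - assert (g y < g cc) by (apply Hdec; lra).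
    assert (g cc - eps < g y).
    { apply HR; try lra. rewrite Rabs_pos_eq in Hyc by lra. lra. }
    rewrite Rabs_left by lra. lra.
Qed.

Section Inv.
Variable a : R.
Hypothesis ha : 0 < a.
Local Notation p := (x0 a).
Local Notation phi := (phi_a a).

Lemma pb : 0 < p < 1.
Proof. apply p_bounds; auto. Qed.

Lemma phi0 : phi 0 = 0.
Proof. apply phi_le0; lra. Qed.

Lemma phi_le_l x y : 0 <= x -> x <= y -> y <= p -> phi x <= phi y.
Proof. intros. destruct (Req_dec x y) as [->|]; [lra|]. left; apply phi_incr; auto; lra. Qed.

Lemma phi_le_r x y : p <= x -> x <= y -> y <= 1 -> phi y <= phi x.
Proof. intros. destruct (Req_dec x y) as [->|]; [lra|]. left; apply phi_decr; auto; lra. Qed.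

Lemma phi_range x : 0 <= x <= 1 -> 0 <= phi x <= phi p.
Proof.
  intros Hx. pose proof pb. destruct (Rle_dec x p).
  - rewrite <- phi0. split; apply phi_le_l; lra.
  - rewrite <- (phi_1 a). split; [apply phi_le_r|apply phi_le_r]; auto; lra.
Qed.

Lemma r_exists v : 0 <= v <= phi p -> exists y, p <= y <= 1 /\ phi y = v.
Proof.
  intros [Hv1 Hv2]. pose proof pb.
  destruct (Rle_lt_or_eq_dec _ _ Hv2) as [Hlt2|Heq2]. 2:{ exists p; split; [lra|auto]. }
  destruct (Rle_lt_or_eq_dec _ _ Hv1) as [Hlt1|Heq1]. 2:{ exists 1; split; [lra|]. rewrite phi_1; auto. }
  assert (Hc : continuity (fun y => v - phi y)).
  { intro y. apply continuity_pt_minus. apply continuity_pt_const; intros u w; auto. apply phi_cont; auto. }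
  assert (H1 : phi 1 = 0) by (apply phi_1).
  destruct (IVT _ p 1 Hc) as [z [Hz1 Hz2]]; cbv beta; try lra.
  exists z; split; auto. cbv beta in Hz2; lra.
Qed.

Lemma l_exists v : 0 <= v <= phi p -> exists y, 0 <= y <= p /\ phi y = v.
Proof.
  intros [Hv1 Hv2]. pose proof pb.
  destruct (Rle_lt_or_eq_dec _ _ Hv2) as [Hlt2|Heq2]. 2:{ exists p; split; [lra|auto]. }
  destruct (Rle_lt_or_eq_dec _ _ Hv1) as [Hlt1|Heq1]. 2:{ exists 0; split; [lra|]. rewrite phi0; auto. }
  assert (Hc : continuity (fun y => phi y - v)).
  { intro y. apply continuity_pt_minus. apply phi_cont; auto. apply continuity_pt_const; intros u w; auto. }
  assert (H1 := phi0).
  destruct (IVT _ 0 p Hc) as [z [Hz1 Hz2]]; cbv beta; try lra.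
  exists z; split; auto. cbv beta in Hz2; lra.
Qed.

Lemma r_inv_spec v : 0 <= v <= phi p -> p <= r_inv a v <= 1 /\ phi (r_inv a v) = v.
Proof.
  intros Hv. unfold r_inv. apply epsilon_spec. apply r_exists; auto.
Qed.

Lemma l_inv_spec v : 0 <= v <= phi p -> 0 <= l_inv a v <= p /\ phi (l_inv a v) = v.
Proof.
  intros Hv. unfold l_inv. apply epsilon_spec. apply l_exists; auto.
Qed.

Lemma r_uniq y1 y2 : p <= y1 <= 1 -> p <= y2 <= 1 -> phi y1 = phi y2 -> y1 = y2.
Proof.
  intros H1 H2 He. destruct (Rtotal_order y1 y2) as [Hl|[Hq|Hg]]; auto.
  - assert (phi y2 < phi y1) by (apply phi_decr; auto; lra). lra.
  - assert (phi y1 < phi y2) by (apply phi_decr; auto; lra). lra.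
Qed.

Lemma l_uniq y1 y2 : 0 <= y1 <= p -> 0 <= y2 <= p -> phi y1 = phi y2 -> y1 = y2.
Proof.
  intros H1 H2 He. destruct (Rtotal_order y1 y2) as [Hl|[Hq|Hg]]; auto.
  - assert (phi y1 < phi y2) by (apply phi_incr; auto; lra). lra.
  - assert (phi y2 < phi y1) by (apply phi_incr; auto; lra). lra.
Qed.

Lemma r_inv_eq y : p <= y <= 1 -> r_inv a (phi y) = y.
Proof.
  intros Hy. pose proof pb. destruct (r_inv_spec (phi y)) as [H1 H2].
  - apply phi_range; lra.
  - apply r_uniq; auto.
Qed.

Lemma l_inv_eq y : 0 <= y <= p -> l_inv a (phi y) = y.
Proof.
  intros Hy. pose proof pb. destruct (l_inv_spec (phi y)) as [H1 H2].
  - apply phi_range; lra.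
  - apply l_uniq; auto.
Qed.

Definition gr x := r_inv a (phi_a a x).
Definition gl x := l_inv a (phi_a a x).

Lemma gr_range x : 0 <= x <= p -> p <= gr x <= 1 /\ phi (gr x) = phi x.
Proof. intros. pose proof pb. apply r_inv_spec. apply phi_range; lra. Qed.

Lemma gl_range x : p <= x <= 1 -> 0 <= gl x <= p /\ phi (gl x) = phi x.
Proof. intros. pose proof pb. apply l_inv_spec. apply phi_range; lra. Qed.

Lemma gr_decr x y : 0 <= x -> x < y -> y <= p -> gr y < gr x.
Proof.
  intros. destruct (gr_range x) as [Hx1 Hx2]; [lra|]. destruct (gr_range y) as [Hy1 Hy2]; [lra|].
  assert (phi x < phi y) by (apply phi_incr; auto).
  destruct (Rlt_dec (gr y) (gr x)); auto.
  assert (phi (gr y) <= phi (gr x)) by (apply phi_le_r; lra). lra.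
Qed.

Lemma gl_decr x y : p <= x -> x < y -> y <= 1 -> gl y < gl x.
Proof.
  intros. destruct (gl_range x) as [Hx1 Hx2]; [lra|]. destruct (gl_range y) as [Hy1 Hy2]; [lra|].
  assert (phi y < phi x) by (apply phi_decr; auto).
  destruct (Rlt_dec (gl y) (gl x)); auto.
  assert (phi (gl x) <= phi (gl y)) by (apply phi_le_l; lra). lra.
Qed.

Lemma gr_p : gr p = p.
Proof. pose proof pb. apply r_inv_eq. lra. Qed.
Lemma gl_p : gl p = p.
Proof. pose proof pb. apply l_inv_eq. lra. Qed.
Lemma gr_0 : gr 0 = 1.
Proof. unfold gr.  rewrite phi0. rewrite <- (phi_1 a). apply r_inv_eq. pose proof pb; lra. Qed.
Lemma gl_1 : gl 1 = 0.
Proof. unfold gl. rewrite phi_1.  rewrite <- phi0 at 1. apply l_inv_eq. pose proof pb; lra. Qed.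

Lemma gr_surj w : gr p <= w <= gr 0 -> exists x, 0 <= x <= p /\ gr x = w.
Proof.
  rewrite gr_p, gr_0. intros Hw. exists (gl w). destruct (gl_range w Hw) as [H1 H2].
  split; auto. unfold gr.  rewrite H2. apply r_inv_eq; auto.
Qed.

Lemma gl_surj w : gl 1 <= w <= gl p -> exists x, p <= x <= 1 /\ gl x = w.
Proof.
  rewrite gl_p, gl_1. intros Hw. exists (gr w). destruct (gr_range w Hw) as [H1 H2].
  split; auto. unfold gl.  rewrite H2. apply l_inv_eq; auto.
Qed.

Lemma gr_cont c : continuity_pt (fun x => gr (clamp 0 p x)) c.
Proof. pose proof pb. apply mono_cont; [lra| |]. intros; apply gr_decr; auto. apply gr_surj. Qed.

Lemma gl_cont c : continuity_pt (fun x => gl (clamp p 1 x)) c.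
Proof. pose proof pb. apply mono_cont; [lra| |]. intros; apply gl_decr; auto. apply gl_surj. Qed.

Lemma gr_bound x : 0 <= x <= p -> Rabs (gr x) <= 1.
Proof. intros H. destruct (gr_range x H). pose proof pb. rewrite Rabs_pos_eq; lra. Qed.
Lemma gl_bound x : p <= x <= 1 -> Rabs (gl x) <= 1.
Proof. intros H. destruct (gl_range x H). pose proof pb. rewrite Rabs_pos_eq; lra. Qed.

End Inv.

Lemma rpow_Rpower x c : 0 < x -> rpow x c = Rpower x c.
Proof. intros H; unfold rpow; destruct (Rle_dec x 0); [lra|auto]. Qed.

Lemma ln_le_minus1 y : 0 < y -> ln y <= y - 1.
Proof.
  intros Hy. destruct (Req_dec (ln y) 0) as [H0|H0].
  - rewrite H0. assert (y = 1). { rewrite <- (exp_ln y) by auto. rewrite H0, exp_0; auto. } lra.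
  - pose proof (exp_ineq1 (ln y) H0). rewrite exp_ln in H by auto. lra.
Qed.

Lemma amgm t c : 0 < t -> 0 < c < 1 -> rpow t c <= c * t + (1 - c).
Proof.
  intros Ht Hc. set (m := c * t + (1 - c)).
  assert (Hm : 0 < m) by (unfold m; nra).
  assert (H1 := ln_le_minus1 (t / m) ltac:(apply Rdiv_lt_0_compat; auto)).
  assert (H2 := ln_le_minus1 (/ m) ltac:(apply Rinv_0_lt_compat; auto)).
  rewrite ln_div in H1 by auto. rewrite ln_Rinv in H2 by auto.
  assert (c * (ln t - ln m) + (1 - c) * (- ln m) <= c * (t/m - 1) + (1 - c) * (/m - 1)) by nra.
  assert (Hz : c * (t/m - 1) + (1 - c) * (/m - 1) = 0) by (unfold m in *; field; lra).
  assert (H3 : c * ln t <= ln m) by lra.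
  rewrite rpow_pos by auto. rewrite <- (exp_ln m) by auto.
  destruct (Rle_lt_or_eq_dec _ _ H3) as [Hl|He]; [left; apply exp_increasing; auto|rewrite He; lra].
Qed.

Lemma rpow_exp_le t c d : 0 < t < 1 -> c <= d -> rpow t d <= rpow t c.
Proof.
  intros Ht Hcd. rewrite !rpow_pos by lra.
  assert (ln t < 0) by (rewrite <- ln_1; apply ln_increasing; lra).
  destruct (Req_dec c d) as [->|]; [lra|]. left. apply exp_increasing. nra.
Qed.

Section Param.
Variable a : R.
Hypothesis ha : 0 < a.
Local Notation p := (x0 a).
Local Notation q := (1 - x0 a).
Local Notation phi := (phi_a a).

Lemma qa : q * a = p.
Proof. unfold x0. field. lra. Qed.

Definition X t := (rpow t q - t) / (1 - t).
Definition Y t := (1 - rpow t p) / (1 - t).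

Lemma XY_range t : 0 < t < 1 -> 0 < X t <= p /\ p <= Y t < 1.
Proof.
  intros Ht. pose proof (pb a ha) as Hp.
  assert (H1 := amgm t q ltac:(lra) ltac:(lra)).
  assert (H2 := amgm t p ltac:(lra) ltac:(lra)).
  assert (H3 : t < rpow t q).
  { rewrite <- (rpow_x1 t) at 1 by lra. destruct (rpow_exp_le t q 1) as [Hl|He]; try lra.
    exfalso. rewrite !rpow_pos in He by lra. apply exp_inv in He.
    assert (ln t < 0) by (rewrite <- ln_1; apply ln_increasing; lra). nra. }
  assert (H4 : t < rpow t p).
  { rewrite <- (rpow_x1 t) at 1 by lra. destruct (rpow_exp_le t p 1) as [Hl|He]; try lra.
    exfalso. rewrite !rpow_pos in He by lra. apply exp_inv in He.
    assert (ln t < 0) by (rewrite <- ln_1; apply ln_increasing; lra). nra. }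
  unfold X, Y. repeat split.
  - apply Rdiv_lt_0_compat; lra.
  - apply Rmult_le_reg_r with (1 - t); [lra|]. unfold Rdiv. rewrite Rmult_assoc, Rinv_l by lra. lra.
  - apply Rmult_le_reg_r with (1 - t); [lra|]. unfold Rdiv. rewrite Rmult_assoc, Rinv_l by lra. lra.
  - apply Rmult_lt_reg_r with (1 - t); [lra|]. unfold Rdiv. rewrite Rmult_assoc, Rinv_l by lra.
    assert (0 < rpow t p) by (apply rpow_gt0; lra). lra.
Qed.

Lemma phi_XY t : 0 < t < 1 -> phi (X t) = phi (Y t).
Proof.
  intros Ht. pose proof (pb a ha) as Hp. destruct (XY_range t Ht) as [[HX1 HX2] [HY1 HY2]].
  rewrite !phi_pos_eq by lra.
  assert (Htq : rpow t q * rpow t p = t).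
  { rewrite <- rpow_plus by lra. replace (q + p) with 1 by ring. apply rpow_x1; lra. }
  assert (HXe : X t = rpow t q * Y t).
  { unfold X, Y. replace (rpow t q - t) with (rpow t q * (1 - rpow t p)) by nra. field. lra. }
  rewrite HXe.
  assert (0 < rpow t q) by (apply rpow_gt0; lra).
  assert (E1 : rpow (rpow t q * Y t) a = rpow t p * rpow (Y t) a).
  { rewrite (rpow_Rpower (_ * _)) by nra. rewrite <- Rpower_mult_distr by lra.
    rewrite (rpow_Rpower t q), Rpower_mult by lra. rewrite qa.
    rewrite !rpow_Rpower by lra. auto. }
  rewrite E1.
  assert (E2 : Y t * (1 - t) = 1 - rpow t p) by (unfold Y; field; lra).
  assert (E3 : rpow t p * (1 - rpow t q * Y t) = 1 - Y t) by nra.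
  rewrite <- E3. ring.
Qed.

Lemma gr_X t : 0 < t < 1 -> gr a (X t) = Y t.
Proof.
  intros Ht. destruct (XY_range t Ht) as [HX HY]. pose proof (pb a ha).
  destruct (gr_range a ha (X t)) as [H1 H2]; [lra|].
  apply (r_uniq a ha); try lra. rewrite H2. apply phi_XY; auto.
Qed.

Lemma gl_Y t : 0 < t < 1 -> gl a (Y t) = X t.
Proof.
  intros Ht. destruct (XY_range t Ht) as [HX HY]. pose proof (pb a ha).
  destruct (gl_range a ha (Y t)) as [H1 H2]; [lra|].
  apply (l_uniq a ha); try lra. rewrite H2. symmetry. apply phi_XY; auto.
Qed.

End Param.

Lemma rpow_ex_derive c t : 0 < t -> ex_derive (fun x => rpow x c) t.
Proof. intros H. eexists. apply rpow_derive_pos; auto. Qed.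

Lemma rpow_Derive c t : 0 < t -> Derive (fun x => rpow x c) t = c * rpow t c / t.
Proof.
  intros H. apply is_derive_unique.
  replace (c * rpow t c / t) with (c * rpow t (c - 1)).
  - apply rpow_derive_pos; auto.
  - replace (rpow t c) with (rpow t ((c-1)+1)) by (f_equal; ring). rewrite rpow_plus, rpow_x1 by auto. field. lra.
Qed.

Ltac side := repeat split; try apply rpow_ex_derive; try lra;
  try (apply Rmult_integral_contrapositive_currified; lra).

Section Deriv.
Variable a : R.
Hypothesis ha : 0 < a.
Local Notation p := (x0 a).
Local Notation q := (1 - x0 a).

Definition dX t := (q * rpow t q / t - 1) / (1 - t) + (rpow t q - t) / ((1 - t) * (1 - t)).
Definition dY t := (- (p * rpow t p / t)) / (1 - t) + (1 - rpow t p) / ((1 - t) * (1 - t)).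
Definition Gq t := (1 - rpow t q) / (1 - t).
Definition Nm t := (q - p) * t - q * rpow t q + p * rpow t p.
Definition Psi t := Nm t / (1 - t) - p * rpow t q + q * rpow t p.
Definition QQ t := - (1/2) * (Y a t * Gq t + Psi t).
Definition QQ2 t := QQ t + Y a t + Psi t.
Definition hh t := (rpow t p - rpow t q) / (1 - t).

Lemma X_derive t : 0 < t < 1 -> is_derive (X a) t (dX t).
Proof.
  intros Ht. unfold X. auto_derive.
  - side.
  - unfold dX. rewrite rpow_Derive by lra. field. lra.
Qed.

Lemma Y_derive t : 0 < t < 1 -> is_derive (Y a) t (dY t).
Proof.
  intros Ht. unfold Y. auto_derive.
  - side.
  - unfold dY. rewrite rpow_Derive by lra. field. lra.
Qed.

Lemma dX_cont t : 0 < t < 1 -> continuous dX t.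
Proof.
  intros Ht. apply (ex_derive_continuous dX). unfold dX. auto_derive.
  side.
Qed.

Lemma dY_cont t : 0 < t < 1 -> continuous dY t.
Proof.
  intros Ht. apply (ex_derive_continuous dY). unfold dY. auto_derive.
  side.
Qed.

Lemma QQ_derive t : 0 < t < 1 -> is_derive QQ t (Y a t * dX t + p * q / 2 * hh t).
Proof.
  intros Ht. unfold QQ, Y, Gq, Psi, Nm. auto_derive.
  - side.
  - unfold dX, hh. rewrite !rpow_Derive by lra.
    assert (HAB : rpow t p * rpow t q = t).
    { rewrite <- rpow_plus by lra. replace (p + q) with 1 by ring. apply rpow_x1; lra. }
    assert (HA : 0 < rpow t p) by (apply rpow_gt0; lra).
    assert (HB : 0 < rpow t q) by (apply rpow_gt0; lra).
    set (A := rpow t p) in *. set (B := rpow t q) in *. clearbody A B.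
    assert (1 - t <> 0) by lra.
    rewrite <- HAB in *. field. repeat split; try lra. 
Qed.

Lemma QQ2_derive t : 0 < t < 1 -> is_derive QQ2 t (X a t * dY t - p * q / 2 * hh t).
Proof.
  intros Ht. unfold QQ2, QQ, Y, Gq, Psi, Nm. auto_derive.
  - side.
  - unfold dY, hh, X. rewrite !rpow_Derive by lra.
    assert (HAB : rpow t p * rpow t q = t).
    { rewrite <- rpow_plus by lra. replace (p + q) with 1 by ring. apply rpow_x1; lra. }
    assert (HA : 0 < rpow t p) by (apply rpow_gt0; lra).
    assert (HB : 0 < rpow t q) by (apply rpow_gt0; lra).
    set (A := rpow t p) in *. set (B := rpow t q) in *. clearbody A B.
    assert (1 - t <> 0) by lra.
    rewrite <- HAB in *. field. repeat split; try lra.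
Qed.

Lemma D1_cont t : 0 < t < 1 -> continuous (fun t => Y a t * dX t + p * q / 2 * hh t) t.
Proof.
  intros Ht. apply (ex_derive_continuous (fun t => Y a t * dX t + p * q / 2 * hh t)).
  unfold Y, dX, hh. auto_derive. side.
Qed.

Lemma D2_cont t : 0 < t < 1 -> continuous (fun t => X a t * dY t - p * q / 2 * hh t) t.
Proof.
  intros Ht. apply (ex_derive_continuous (fun t => X a t * dY t - p * q / 2 * hh t)).
  unfold X, dY, hh. auto_derive. side.
Qed.

Lemma hh_cont t : 0 < t < 1 -> continuous hh t.
Proof.
  intros Ht. apply (ex_derive_continuous hh). unfold hh. auto_derive. side.
Qed.

End Deriv.

Section Subst.
Variable a : R.
Hypothesis ha : 0 < a.
Local Notation p := (x0 a).
Local Notation q := (1 - x0 a).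

Definition Gc x := gr a (clamp 0 p x).
Definition Lc x := gl a (clamp p 1 x).

Lemma hh_int e T : 0 < e -> e <= T -> T < 1 -> is_RInt (hh a) e T (RInt (hh a) e T).
Proof.
  intros. apply (RInt_correct (V := R_CompleteNormedModule)). apply (ex_RInt_continuous (V := R_CompleteNormedModule)). intros z Hz.
  rewrite Rmin_left, Rmax_right in Hz by lra. apply hh_cont; lra.
Qed.

Lemma key1 e T : 0 < e -> e <= T -> T < 1 ->
  RInt Gc (X a e) (X a T) = QQ a T - QQ a e - p * q / 2 * RInt (hh a) e T.
Proof.
  intros He HeT HT.
  assert (I1 : is_RInt (fun y => scal (dX a y) (Gc (X a y))) e T (RInt Gc (X a e) (X a T))).
  { apply (is_RInt_comp (V := R_CompleteNormedModule)).
    - intros x Hx. apply continuity_pt_filterlim. apply gr_cont; auto.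
    - rewrite Rmin_left, Rmax_right by lra. intros x Hx. split.
      + apply X_derive; lra.
      + apply dX_cont; lra. }
  assert (I3 : is_RInt (fun t => Y a t * dX a t + p * q / 2 * hh a t) e T (minus (QQ a T) (QQ a e))).
  { apply (is_RInt_derive (V := R_CompleteNormedModule)).
    - rewrite Rmin_left, Rmax_right by lra. intros x Hx. apply QQ_derive; lra.
    - rewrite Rmin_left, Rmax_right by lra. intros x Hx. apply D1_cont; lra. }
  assert (I2 := is_RInt_scal _ _ _ (p * q / 2) _ (hh_int e T He HeT HT)).
  assert (I4 := is_RInt_minus _ _ _ _ _ _ I3 I2).
  cbv beta in I4. apply (is_RInt_unique (V := R_CompleteNormedModule)) in I4. apply (is_RInt_unique (V := R_CompleteNormedModule)) in I1.
  rewrite <- I1. rewrite (RInt_ext (fun y => scal (dX a y) (Gc (X a y))) (fun y : R => minus (Y a y * dX a y + p * q / 2 * hh a y) (scal (p * q / 2) (hh a y)))).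
  - etransitivity; [apply I4|]. unfold minus, plus, opp, scal; simpl. unfold mult; simpl. ring.
  - rewrite Rmin_left, Rmax_right by lra. intros x Hx.
    unfold Gc. rewrite clamp_id. 2:{ destruct (XY_range a ha x) as [H1 H2]; lra. }
    rewrite gr_X by (auto; lra).
    unfold minus, plus, opp, scal; simpl. unfold mult; simpl. ring.
Qed.

Lemma key2 e T : 0 < e -> e <= T -> T < 1 ->
  RInt Lc (Y a e) (Y a T) = QQ2 a T - QQ2 a e + p * q / 2 * RInt (hh a) e T.
Proof.
  intros He HeT HT.
  assert (I1 : is_RInt (fun y => scal (dY a y) (Lc (Y a y))) e T (RInt Lc (Y a e) (Y a T))).
  { apply (is_RInt_comp (V := R_CompleteNormedModule)).
    - intros x Hx. apply continuity_pt_filterlim. apply gl_cont; auto.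
    - rewrite Rmin_left, Rmax_right by lra. intros x Hx. split.
      + apply Y_derive; lra.
      + apply dY_cont; lra. }
  assert (I3 : is_RInt (fun t => X a t * dY a t - p * q / 2 * hh a t) e T (minus (QQ2 a T) (QQ2 a e))).
  { apply (is_RInt_derive (V := R_CompleteNormedModule)).
    - rewrite Rmin_left, Rmax_right by lra. intros x Hx. apply QQ2_derive; lra.
    - rewrite Rmin_left, Rmax_right by lra. intros x Hx. apply D2_cont; lra. }
  assert (I2 := is_RInt_scal _ _ _ (p * q / 2) _ (hh_int e T He HeT HT)).
  assert (I4 := is_RInt_plus _ _ _ _ _ _ I3 I2).
  cbv beta in I4. apply (is_RInt_unique (V := R_CompleteNormedModule)) in I4. apply (is_RInt_unique (V := R_CompleteNormedModule)) in I1.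
  rewrite <- I1. rewrite (RInt_ext (fun y => scal (dY a y) (Lc (Y a y))) (fun y : R => plus (X a y * dY a y - p * q / 2 * hh a y) (scal (p * q / 2) (hh a y)))).
  - etransitivity; [apply I4|]. unfold minus, plus, opp, scal; simpl. unfold mult; simpl. ring.
  - rewrite Rmin_left, Rmax_right by lra. intros x Hx.
    unfold Lc. rewrite clamp_id. 2:{ destruct (XY_range a ha x) as [H1 H2]; lra. }
    rewrite gl_Y by (auto; lra).
    unfold minus, plus, opp, scal; simpl. unfold mult; simpl. ring.
Qed.

End Subst.

Lemma lim_scal f x l c : is_lim f x (Finite l) -> is_lim (fun y => c * f y) x (c * l).
Proof. intros H. apply (is_lim_scal_l f c x l) in H. exact H. Qed.

Lemma lim_mult f g x lf lg : is_lim f x (Finite lf) -> is_lim g x (Finite lg) ->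
  is_lim (fun y => f y * g y) x (lf * lg).
Proof. intros H1 H2. apply (is_lim_mult f g x lf lg H1 H2). simpl. auto. Qed.

Lemma quot_lim g d : g 1 = 0 -> is_derive g 1 d -> is_lim (fun t => g t / (1 - t)) 1 (- d).
Proof.
  intros H0 Hd. apply is_lim_spec. apply is_derive_Reals in Hd.
  intros eps. destruct (Hd eps (cond_pos eps)) as [del Hdel].
  assert (K : forall t : R, Rabs (t - 1) < del -> t <> 1 -> Rabs (g t / (1 - t) - - d) < eps).
  { intros t Ht Hne.
    assert (Hh : t - 1 <> 0) by (intro; apply Hne; lra).
    specialize (Hdel (t - 1) Hh Ht).
    replace (1 + (t - 1)) with t in Hdel by ring. rewrite H0 in Hdel.
    replace (g t / (1 - t) - - d) with (- ((g t - 0) / (t - 1) - d)) by (field; lra).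
    rewrite Rabs_Ropp; auto. }
  exists del. intros t Ht Hne. apply K; auto.
Qed.

Lemma rpow_lim c (x : R) : 0 < c -> is_lim (fun t => rpow t c) x (rpow x c).
Proof. intros Hc. apply (is_lim_continuity (fun t => rpow t c)). apply continuity_pt_filterlim. apply rpow_cont; auto. Qed.

Lemma lim_id x : is_lim (fun t => t) x x.
Proof. apply is_lim_id. Qed.

Lemma lim_const c x : is_lim (fun _ => c) x c.
Proof. apply is_lim_const. Qed.

Lemma lim_div f g x lf lg : is_lim f x (Finite lf) -> is_lim g x (Finite lg) -> lg <> 0 ->
  is_lim (fun y => f y / g y) x (lf / lg).
Proof.
  intros H1 H2 H3. apply (is_lim_div f g x lf lg H1 H2).
  - intro E; apply H3. injection E; auto.
  - simpl. auto.
Qed.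

Section Lims.
Variable a : R.
Hypothesis ha : 0 < a.
Local Notation p := (x0 a).
Local Notation q := (1 - x0 a).

Lemma pq_pos : 0 < p /\ 0 < q.
Proof. pose proof (pb a ha). lra. Qed.

Lemma rpow_at0 c : 0 < c -> rpow 0 c = 0.
Proof. intros; apply rpow_le0; lra. Qed.

Lemma lim0_quot g l : is_lim g 0 (Finite l) -> is_lim (fun t => g t / (1 - t)) 0 l.
Proof.
  intros H. replace l with (l / (1 - 0)) by (field). apply lim_div; auto.
  - apply (is_lim_minus' (fun _ => 1) (fun t => t)); [apply lim_const|apply lim_id].
  - lra.
Qed.

Lemma X_lim0 : is_lim (X a) 0 0.
Proof.
  destruct pq_pos. unfold X. replace 0 with ((rpow 0 q - 0) / (1 - 0)) at 2 by (rewrite rpow_at0; [field|lra]).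
  apply lim_div; [| |lra].
  - apply is_lim_minus'; [apply rpow_lim; lra|apply lim_id].
  - apply (is_lim_minus' (fun _ => 1) (fun t => t)); [apply lim_const|apply lim_id].
Qed.

Lemma quot_lim' g d l : g 1 = 0 -> is_derive g 1 d -> l = - d -> is_lim (fun t => g t / (1 - t)) 1 l.
Proof. intros H1 H2 ->. apply quot_lim; auto. Qed.

Lemma lim0_gen g l : is_lim g 0 (Finite l) -> forall l', l' = l -> is_lim (fun t => g t / (1 - t)) 0 l'.
Proof. intros H l' ->. apply lim0_quot; auto. Qed.

Lemma Y_lim0 : is_lim (Y a) 0 1.
Proof.
  destruct pq_pos. unfold Y. apply lim0_gen with (l := 1 - rpow 0 p).
  - apply (is_lim_minus' (fun _ => 1)); [apply lim_const|apply rpow_lim; lra].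
  - rewrite rpow_at0; lra.
Qed.

Lemma Gq_lim0 : is_lim (Gq a) 0 1.
Proof.
  destruct pq_pos. unfold Gq. apply lim0_gen with (l := 1 - rpow 0 q).
  - apply (is_lim_minus' (fun _ => 1)); [apply lim_const|apply rpow_lim; lra].
  - rewrite rpow_at0; lra.
Qed.

Lemma Psi_lim0 : is_lim (Psi a) 0 0.
Proof.
  destruct pq_pos. unfold Psi, Nm.
  replace 0 with (((q - p) * 0 - q * rpow 0 q + p * rpow 0 p) / (1 - 0) - p * rpow 0 q + q * rpow 0 p) at 2
    by (rewrite !rpow_at0 by lra; field).
  apply is_lim_plus'; [apply is_lim_minus'|].
  - apply lim_div; [| |lra].
    + apply is_lim_plus'; [apply is_lim_minus'|].
      * apply lim_scal, lim_id.
      * apply lim_scal, rpow_lim; lra.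
      * apply lim_scal, rpow_lim; lra.
    + apply (is_lim_minus' (fun _ => 1)); [apply lim_const|apply lim_id].
  - apply lim_scal, rpow_lim; lra.
  - apply lim_scal, rpow_lim; lra.
Qed.

Lemma X_lim1 : is_lim (X a) 1 p.
Proof.
  destruct pq_pos. unfold X. apply (quot_lim' (fun t => rpow t q - t) (q - 1)).
  - rewrite rpow_1; ring.
  - auto_derive.
    + side.
    + rewrite rpow_Derive, rpow_1 by lra. field.
  - ring.
Qed.

Lemma Y_lim1 : is_lim (Y a) 1 p.
Proof.
  destruct pq_pos. unfold Y. apply (quot_lim' (fun t => 1 - rpow t p) (- p)).
  - rewrite rpow_1; ring.
  - auto_derive.
    + side.
    + rewrite rpow_Derive, rpow_1 by lra. field.
  - ring.
Qed.

Lemma Gq_lim1 : is_lim (Gq a) 1 q.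
Proof.
  destruct pq_pos. unfold Gq. apply (quot_lim' (fun t => 1 - rpow t q) (- q)).
  - rewrite rpow_1; ring.
  - auto_derive.
    + side.
    + rewrite rpow_Derive, rpow_1 by lra. field.
  - ring.
Qed.

Lemma Psi_lim1 : is_lim (Psi a) 1 (q - p).
Proof.
  destruct pq_pos. unfold Psi.
  replace (q - p) with (0 - p * rpow 1 q + q * rpow 1 p) by (rewrite !rpow_1; ring).
  apply is_lim_plus'; [apply is_lim_minus'|].
  - apply (quot_lim' (Nm a) 0).
    + unfold Nm. rewrite !rpow_1; ring.
    + unfold Nm. auto_derive.
      * side.
      * rewrite !rpow_Derive, !rpow_1 by lra. field.
    + ring.
  - apply lim_scal, rpow_lim; lra.
  - apply lim_scal, rpow_lim; lra.
Qed.

Definition Q1 := - (1/2) * (p * q + (q - p)).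

Lemma QQ_lim1 : is_lim (QQ a) 1 Q1.
Proof.
  unfold QQ, Q1. apply lim_scal. apply is_lim_plus'; [apply lim_mult|].
  apply Y_lim1. apply Gq_lim1. apply Psi_lim1.
Qed.

Lemma QQ_lim0 : is_lim (QQ a) 0 (- (1/2)).
Proof.
  assert (H : is_lim (QQ a) 0 (- (1/2) * (1 * 1 + 0))).
  { unfold QQ. apply lim_scal. apply is_lim_plus'; [apply lim_mult|].
    apply Y_lim0. apply Gq_lim0. apply Psi_lim0. }
  replace (- (1/2) * (1 * 1 + 0)) with (- (1/2)) in H by ring. exact H.
Qed.

Lemma QQ2_lim1 : is_lim (QQ2 a) 1 (Q1 + q).
Proof.
  unfold QQ2. replace (Q1 + q) with (Q1 + p + (q - p)) by ring.
  apply is_lim_plus'; [apply is_lim_plus'|].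
  apply QQ_lim1. apply Y_lim1. apply Psi_lim1.
Qed.

Lemma QQ2_lim0 : is_lim (QQ2 a) 0 (1/2).
Proof.
  unfold QQ2. replace (1/2) with (- (1/2) + 1 + 0) by field.
  apply is_lim_plus'; [apply is_lim_plus'|].
  apply QQ_lim0. apply Y_lim0. apply Psi_lim0.
Qed.

End Lims.

Lemma lim_eps f (x l : R) : is_lim f x l -> forall eps, 0 < eps ->
  exists d, 0 < d /\ forall y, Rabs (y - x) < d -> y <> x -> Rabs (f y - l) < eps.
Proof.
  intros H eps He. apply is_lim_spec in H. destruct (H (mkposreal _ He)) as [d Hd].
  exists d; split; [apply cond_pos|]. intros y Hy Hne. apply Hd; auto.
Qed.

Lemma lim_cont f (x : R) : is_lim f x (f x) -> continuity_pt f x.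
Proof.
  intros H. unfold continuity_pt, continue_in, limit1_in, limit_in; simpl; unfold R_dist.
  intros eps He. destruct (lim_eps f x (f x) H eps He) as [d [Hd Hd2]].
  exists d; split; auto. intros y [_ Hy].
  destruct (Req_dec y x) as [->|Hne]. rewrite Rminus_diag, Rabs_R0; auto. apply Hd2; auto.
Qed.

Lemma approx_eq A B C : (forall eps, 0 < eps -> Rabs (A - B) <= C * eps) -> A = B.
Proof.
  intros H. destruct (Req_dec A B) as [|Hne]; auto. exfalso.
  assert (Hp : 0 < Rabs (A - B)) by (apply Rabs_pos_lt; lra).
  assert (HC : 0 < C).
  { specialize (H 1 Rlt_0_1). lra. }
  specialize (H (Rabs (A - B) / (2 * C))).
  assert (0 < Rabs (A - B) / (2 * C)) by (apply Rdiv_lt_0_compat; lra).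
  specialize (H H0). replace (C * (Rabs (A - B) / (2 * C))) with (Rabs (A - B) / 2) in H by (field; lra). lra.
Qed.

Section Final.
Variable a : R.
Hypothesis ha : 0 < a.
Local Notation p := (x0 a).
Local Notation q := (1 - x0 a).

Definition hc t := if Req_EM_T t 1 then q - p else hh a t.

Lemma hh_lim t : t < 1 -> is_lim (hh a) t (hh a t).
Proof.
  intros Ht. destruct (pq_pos a ha). unfold hh. apply lim_div; [| |lra].
  - apply is_lim_minus'; apply rpow_lim; lra.
  - apply (is_lim_minus' (fun _ => 1)); [apply lim_const|apply lim_id].
Qed.

Lemma hh_lim1 : is_lim (hh a) 1 (q - p).
Proof.
  destruct (pq_pos a ha). unfold hh. apply (quot_lim' (fun t => rpow t p - rpow t q) (p - q)).
  - rewrite !rpow_1; ring.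
  - auto_derive.
    + side.
    + rewrite !rpow_Derive, !rpow_1 by lra. field.
  - ring.
Qed.

Lemma hc_cont t : t <= 1 -> continuity_pt hc t.
Proof.
  intros Ht. destruct (Rle_lt_or_eq_dec _ _ Ht) as [Hl|He].
  - apply continuity_pt_ext_loc with (f := hh a).
    + assert (Hd : 0 < 1 - t) by lra. exists (mkposreal _ Hd). intros y Hy. simpl in Hy.
      unfold ball in Hy; simpl in Hy; unfold AbsRing_ball, abs, minus, plus, opp in Hy; simpl in Hy.
      apply Rabs_lt_between in Hy. unfold hc. destruct (Req_EM_T y 1); [lra|auto].
    + apply lim_cont. apply hh_lim; auto.
  - subst t. apply lim_cont. unfold hc at 2. destruct (Req_EM_T 1 1) as [_|]; [|lra].
    apply is_lim_ext_loc with (f := hh a); [|apply hh_lim1].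
    exists (mkposreal _ Rlt_0_1). intros y _ Hy. unfold hc. destruct (Req_EM_T y 1); [contradiction|auto].
Qed.

Lemma hc_bound t : 0 <= t <= 1 -> Rabs (hc t) <= 1.
Proof.
  intros Ht. destruct (pq_pos a ha). unfold hc. destruct (Req_EM_T t 1).
  - apply Rabs_le; lra.
  - unfold hh. destruct (Req_dec t 0) as [->|Ht0].
    + rewrite !rpow_at0 by lra. unfold Rdiv; rewrite Rminus_diag, Rmult_0_l, Rabs_R0; lra.
    + assert (Hb : forall c, 0 <= c <= 1 -> t <= rpow t c <= 1).
      { intros c Hc. split.
        - rewrite <- (rpow_x1 t) at 1 by lra. apply rpow_exp_le; lra.
        - replace 1 with (rpow t 0). apply rpow_exp_le; lra. rewrite rpow_pos by lra. rewrite Rmult_0_l, exp_0; auto. }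
      destruct (Hb p) as [H1 H2]; [lra|]. destruct (Hb q) as [H3 H4]; [lra|].
      rewrite Rabs_div by lra. rewrite (Rabs_pos_eq (1 - t)) by lra.
      apply Rmult_le_reg_r with (1 - t); [lra|]. unfold Rdiv. rewrite Rmult_assoc, Rinv_l by lra.
      rewrite Rmult_1_r, Rmult_1_l. apply Rabs_le; lra.
Qed.

Definition Hv := RInt hc 0 1.

Lemma hc_ex u v : 0 <= u -> u <= v -> v <= 1 -> ex_RInt hc u v.
Proof.
  intros. apply (ex_RInt_continuous (V := R_CompleteNormedModule)). intros z Hz.
  rewrite Rmin_left, Rmax_right in Hz by lra. apply continuity_pt_filterlim. apply hc_cont; lra.
Qed.

Lemma hc_small u v : 0 <= u -> u <= v -> v <= 1 -> Rabs (RInt hc u v) <= v - u.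
Proof.
  intros. replace (v - u) with ((v - u) * 1) by ring. apply abs_RInt_le_const; auto.
  apply hc_ex; auto. intros t Ht. apply hc_bound; lra.
Qed.

Lemma hh_approx e T : 0 < e -> e <= T -> T < 1 -> Rabs (RInt (hh a) e T - Hv) <= e + (1 - T).
Proof.
  intros He HeT HT.
  assert (E1 : RInt (hh a) e T = RInt hc e T).
  { apply RInt_ext. rewrite Rmin_left, Rmax_right by lra. intros x Hx. unfold hc.
    destruct (Req_EM_T x 1); [lra|auto]. }
  assert (E2 : plus (RInt hc 0 e) (RInt hc e 1) = RInt hc 0 1) by (apply RInt_Chasles; apply hc_ex; lra).
  assert (E3 : plus (RInt hc e T) (RInt hc T 1) = RInt hc e 1) by (apply RInt_Chasles; apply hc_ex; lra).
  unfold plus in E2, E3; simpl in E2, E3. unfold Hv. rewrite E1, <- E2, <- E3.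
  pose proof (hc_small 0 e) as S1. pose proof (hc_small T 1) as S2.
  replace (RInt hc e T - (RInt hc 0 e + (RInt hc e T + RInt hc T 1))) with (- (RInt hc 0 e + RInt hc T 1)) by ring.
  rewrite Rabs_Ropp. eapply Rle_trans; [apply Rabs_triang|].
  assert (Rabs (RInt hc 0 e) <= e - 0) by (apply S1; lra).
  assert (Rabs (RInt hc T 1) <= 1 - T) by (apply S2; lra). lra.
Qed.

End Final.

Ltac minle := match goal with
 | |- Rmin ?x ?y <= ?z => first [ apply Rle_trans with x; [apply Rmin_l | minle] | apply Rle_trans with y; [apply Rmin_r | minle] ]
 | |- ?x <= ?x => apply Rle_refl
 end.

Section Asm.
Variable a : R.
Hypothesis ha : 0 < a.
Local Notation p := (x0 a).
Local Notation q := (1 - x0 a).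

Lemma Gc_ex u v : ex_RInt (Gc a) u v.
Proof.
  apply (ex_RInt_continuous (V := R_CompleteNormedModule)). intros z _.
  apply continuity_pt_filterlim. apply gr_cont; auto.
Qed.

Lemma Lc_ex u v : ex_RInt (Lc a) u v.
Proof.
  apply (ex_RInt_continuous (V := R_CompleteNormedModule)). intros z _.
  apply continuity_pt_filterlim. apply gl_cont; auto.
Qed.

Lemma Gc_small u v : u <= v -> Rabs (RInt (Gc a) u v) <= v - u.
Proof.
  intros. replace (v - u) with ((v - u) * 1) by ring. apply abs_RInt_le_const; auto.
  apply Gc_ex. intros t Ht. unfold Gc. pose proof (pb a ha).
  apply gr_bound; auto. apply clamp_in; lra.
Qed.

Lemma Lc_small u v : u <= v -> Rabs (RInt (Lc a) u v) <= v - u.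
Proof.
  intros. replace (v - u) with ((v - u) * 1) by ring. apply abs_RInt_le_const; auto.
  apply Lc_ex. intros t Ht. unfold Lc. pose proof (pb a ha).
  apply gl_bound; auto. apply clamp_in; lra.
Qed.

Lemma pq_small : 0 < p * q / 2 <= 1.
Proof. destruct (pq_pos a ha). pose proof (pb a ha). split. apply Rdiv_lt_0_compat; nra. nra. Qed.

Lemma choose_pts eps : 0 < eps ->
  exists e T, 0 < e /\ e <= T /\ T < 1 /\ e <= eps /\ 1 - T <= eps /\
   Rabs (X a e - 0) < eps /\ Rabs (QQ a e - - (1/2)) < eps /\ Rabs (QQ2 a e - 1/2) < eps /\ Rabs (Y a e - 1) < eps /\
   Rabs (X a T - p) < eps /\ Rabs (QQ a T - Q1 a) < eps /\ Rabs (QQ2 a T - (Q1 a + q)) < eps /\ Rabs (Y a T - p) < eps.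
Proof.
  intros He.
  destruct (lim_eps _ _ _ (X_lim0 a ha) eps He) as [d1 [Hd1 L1]].
  destruct (lim_eps _ _ _ (QQ_lim0 a ha) eps He) as [d2 [Hd2 L2]].
  destruct (lim_eps _ _ _ (QQ2_lim0 a ha) eps He) as [d3 [Hd3 L3]].
  destruct (lim_eps _ _ _ (Y_lim0 a ha) eps He) as [d4 [Hd4 L4]].
  destruct (lim_eps _ _ _ (X_lim1 a ha) eps He) as [d5 [Hd5 L5]].
  destruct (lim_eps _ _ _ (QQ_lim1 a ha) eps He) as [d6 [Hd6 L6]].
  destruct (lim_eps _ _ _ (QQ2_lim1 a ha) eps He) as [d7 [Hd7 L7]].
  destruct (lim_eps _ _ _ (Y_lim1 a ha) eps He) as [d8 [Hd8 L8]].
  set (m0 := Rmin (Rmin (Rmin d1 d2) (Rmin d3 d4)) (Rmin eps (1/2))).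
  set (m1 := Rmin (Rmin (Rmin d5 d6) (Rmin d7 d8)) (Rmin eps (1/2))).
  assert (Hm0 : 0 < m0) by (unfold m0; repeat apply Rmin_pos; lra).
  assert (Hm1 : 0 < m1) by (unfold m1; repeat apply Rmin_pos; lra).
  assert (B0 : m0 <= d1 /\ m0 <= d2 /\ m0 <= d3 /\ m0 <= d4 /\ m0 <= eps /\ m0 <= 1/2)
    by (unfold m0; repeat split; minle).
  assert (B1 : m1 <= d5 /\ m1 <= d6 /\ m1 <= d7 /\ m1 <= d8 /\ m1 <= eps /\ m1 <= 1/2)
    by (unfold m1; repeat split; minle).
  exists (m0 / 2), (1 - m1 / 2).
  assert (A0 : Rabs (m0 / 2 - 0) < m0) by (rewrite Rminus_0_r, Rabs_pos_eq; lra).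
  assert (A1 : Rabs (1 - m1 / 2 - 1) < m1) by (rewrite Rabs_left; lra).
  assert (N0 : m0 / 2 <> 0) by lra. assert (N1 : 1 - m1 / 2 <> 1) by lra.
  repeat split; try lra.
  - apply L1; auto; lra.
  - apply L2; auto; lra.
  - apply L3; auto; lra.
  - apply L4; auto; lra.
  - apply L5; auto; lra.
  - apply L6; auto; lra.
  - apply L7; auto; lra.
  - apply L8; auto; lra.
Qed.

Lemma absle x y : Rabs x <= y -> - y <= x <= y.
Proof. unfold Rabs; destruct Rcase_abs; intros; lra. Qed.
Lemma abslt x y : Rabs x < y -> - y < x < y.
Proof. unfold Rabs; destruct Rcase_abs; intros; lra. Qed.

Lemma I2_val : RInt (Gc a) 0 p = Q1 a + 1/2 - p * q / 2 * Hv a.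
Proof.
  apply approx_eq with 7. intros eps Heps.
  destruct (choose_pts eps Heps) as [e [T [He [HeT [HT [Hee [HTe [L1 [L2 [L3 [L4 [L5 [L6 [L7 L8]]]]]]]]]]]]]].
  destruct (XY_range a ha e) as [[HX1 HX2] _]; [lra|].
  destruct (XY_range a ha T) as [[HX3 HX4] _]; [lra|].
  assert (E1 : plus (RInt (Gc a) 0 (X a e)) (RInt (Gc a) (X a e) p) = RInt (Gc a) 0 p) by (apply RInt_Chasles; apply Gc_ex).
  assert (E2 : plus (RInt (Gc a) (X a e) (X a T)) (RInt (Gc a) (X a T) p) = RInt (Gc a) (X a e) p) by (apply RInt_Chasles; apply Gc_ex).
  unfold plus in E1, E2; simpl in E1, E2.
  rewrite <- E1, <- E2, key1 by (auto; lra).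
  pose proof (Gc_small 0 (X a e) ltac:(lra)) as S1.
  pose proof (Gc_small (X a T) p ltac:(lra)) as S2.
  pose proof (hh_approx a ha e T He HeT HT) as S3.
  pose proof pq_small as Hc.
  assert (S4 : Rabs (p * q / 2 * (RInt (hh a) e T - Hv a)) <= 2 * eps).
  { rewrite Rabs_mult, (Rabs_pos_eq (p * q / 2)) by lra.
    apply Rle_trans with (1 * (e + (1 - T))); [|lra].
    apply Rmult_le_compat; try lra. apply Rabs_pos. }
  apply absle in S1. apply absle in S2. apply absle in S4.
  apply abslt in L1. apply abslt in L2. apply abslt in L5. apply abslt in L6.
  apply Rabs_le. lra.
Qed.

Lemma J_val : RInt (Lc a) p 1 = 1/2 - Q1 a - q - p * q / 2 * Hv a.
Proof.
  apply approx_eq with 7. intros eps Heps.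
  destruct (choose_pts eps Heps) as [e [T [He [HeT [HT [Hee [HTe [L1 [L2 [L3 [L4 [L5 [L6 [L7 L8]]]]]]]]]]]]]].
  destruct (XY_range a ha e) as [_ [HY1 HY2]]; [lra|].
  destruct (XY_range a ha T) as [_ [HY3 HY4]]; [lra|].
  assert (E1 : plus (RInt (Lc a) p (Y a T)) (RInt (Lc a) (Y a T) 1) = RInt (Lc a) p 1) by (apply RInt_Chasles; apply Lc_ex).
  assert (E2 : plus (RInt (Lc a) (Y a T) (Y a e)) (RInt (Lc a) (Y a e) 1) = RInt (Lc a) (Y a T) 1) by (apply RInt_Chasles; apply Lc_ex).
  unfold plus in E1, E2; simpl in E1, E2.
  rewrite <- E1, <- E2.
  assert (E3 : RInt (Lc a) (Y a T) (Y a e) = - RInt (Lc a) (Y a e) (Y a T)).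
  { rewrite <- opp_RInt_swap by apply Lc_ex. reflexivity. }
  rewrite E3, key2 by (auto; lra).
  pose proof (Lc_small p (Y a T) ltac:(lra)) as S1.
  pose proof (Lc_small (Y a e) 1 ltac:(lra)) as S2.
  pose proof (hh_approx a ha e T He HeT HT) as S3.
  pose proof pq_small as Hc.
  assert (S4 : Rabs (p * q / 2 * (RInt (hh a) e T - Hv a)) <= 2 * eps).
  { rewrite Rabs_mult, (Rabs_pos_eq (p * q / 2)) by lra.
    apply Rle_trans with (1 * (e + (1 - T))); [|lra].
    apply Rmult_le_compat; try lra. apply Rabs_pos. }
  apply absle in S1. apply absle in S2. apply absle in S4.
  apply abslt in L3. apply abslt in L4. apply abslt in L7. apply abslt in L8.
  apply Rabs_le. lra.
Qed.

End Asm.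

Fixpoint SN (N : nat) (x : R) : R :=
  match N with
  | O => 0
  | S n => SN n x + (1 / (INR n + 1 + x) - 1 / (INR n + 2 - x))
  end.

Lemma pow_RInt01 N : is_RInt (fun t => t ^ N) 0 1 (1 / (INR N + 1)).
Proof.
  replace (1 / (INR N + 1)) with (minus (1 ^ (S N) / (INR N + 1)) (0 ^ (S N) / (INR N + 1))).
  2:{ rewrite pow1, pow_i by lia. unfold minus, plus, opp; simpl. field. pose proof (pos_INR N). lra. }
  apply (is_RInt_derive (V := R_CompleteNormedModule) (fun t => t ^ (S N) / (INR N + 1))).
  - intros x _. pose proof (pos_INR N). auto_derive; [lra|].
    replace (match N with | 0%nat => 1 | S _ => INR N + 1 end) with (INR N + 1) by (destruct N; simpl; lra). field. lra.
  - intros x _. apply (ex_derive_continuous (fun t => t ^ N)). auto_derive. auto.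
Qed.

Lemma rpow_nat t n : 0 < t -> rpow t (INR n) = t ^ n.
Proof. intros. rewrite rpow_Rpower by auto. apply Rpower_pow; auto. Qed.

Section HS.
Variable a : R.
Hypothesis ha : 0 < a.
Local Notation p := (x0 a).
Local Notation q := (1 - x0 a).

Lemma tNhc_ex N : ex_RInt (fun t => t ^ N * hc a t) 0 1.
Proof.
  apply (ex_RInt_continuous (V := R_CompleteNormedModule)). intros z Hz.
  rewrite Rmin_left, Rmax_right in Hz by lra.
  apply continuity_pt_filterlim.
  apply (continuity_pt_mult (fun t => t ^ N) (hc a)).
  - apply derivable_continuous_pt. apply derivable_pt_pow.
  - apply hc_cont; lra.
Qed.

Lemma H_step N : RInt (fun t => t ^ N * hc a t) 0 1 =
  (1 / (INR N + 1 + p) - 1 / (INR N + 2 - p)) + RInt (fun t => t ^ (S N) * hc a t) 0 1.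
Proof.
  destruct (pq_pos a ha). pose proof (pos_INR N).
  assert (I1 := rpow_RInt01 (INR N + p) ltac:(lra)).
  assert (I2 := rpow_RInt01 (INR N + q) ltac:(lra)).
  assert (I3 := RInt_correct _ _ _ (tNhc_ex (S N))).
  assert (I4 := is_RInt_plus _ _ _ _ _ _ (is_RInt_minus _ _ _ _ _ _ I1 I2) I3).
  apply (is_RInt_ext _ (fun t => t ^ N * hc a t)) in I4.
  - apply (is_RInt_unique (V := R_CompleteNormedModule)) in I4. rewrite I4.
    replace (INR N + p + 1) with (INR N + 1 + p) by ring.
    replace (INR N + q + 1) with (INR N + 2 - p) by ring. reflexivity.
  - rewrite Rmin_left, Rmax_right by lra. intros t Ht.
    unfold hc. destruct (Req_EM_T t 1); [lra|]. unfold hh.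
    rewrite !rpow_plus, !rpow_nat by lra. unfold minus, plus, opp; simpl. unfold plus; simpl. field. lra.
Qed.

Lemma H_sum N : Hv a = SN N p + RInt (fun t => t ^ N * hc a t) 0 1.
Proof.
  induction N.
  - unfold Hv. simpl SN. rewrite Rplus_0_l. apply RInt_ext. intros x _. simpl. ring.
  - rewrite IHN, H_step. simpl. ring.
Qed.

Lemma H_approx N : Rabs (Hv a - SN N p) <= 1 / (INR N + 1).
Proof.
  rewrite (H_sum N). assert (E : forall x y : R, x + y - x = y) by (intros; ring). rewrite E.
  assert (Ip := pow_RInt01 N).
  assert (Ip' := is_RInt_unique (V := R_CompleteNormedModule) _ _ _ _ Ip).
  assert (Ex : ex_RInt (fun t => t ^ N) 0 1) by (eexists; apply Ip).
  apply Rabs_le. split.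
  - rewrite <- Ip'.
    assert (Eo : RInt (fun t => - t ^ N) 0 1 = - RInt (fun t => t ^ N) 0 1) by (apply (RInt_opp (V:=R_CompleteNormedModule)); auto).
    rewrite <- Eo. apply RInt_le; [lra| |apply tNhc_ex|].
    + apply (ex_RInt_opp (V:=R_CompleteNormedModule) (fun t => t ^ N)); auto.
    + intros t Ht. pose proof (hc_bound a ha t ltac:(lra)) as Hb.
      apply absle in Hb. assert (0 <= t ^ N) by (apply pow_le; lra). nra.
  - rewrite <- Ip'. apply RInt_le; [lra|apply tNhc_ex|auto|].
    intros t Ht. pose proof (hc_bound a ha t ltac:(lra)) as Hb.
    apply absle in Hb. assert (0 <= t ^ N) by (apply pow_le; lra). nra.
Qed.

End HS.

Lemma arch C eps : 0 < eps -> exists N : nat, C / (INR N + 1) < eps.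
Proof.
  intros He. destruct (INR_archimed eps (Rabs C) He) as [N HN].
  exists N. pose proof (pos_INR N).
  apply Rmult_lt_reg_r with (INR N + 1); [lra|]. unfold Rdiv. rewrite Rmult_assoc, Rinv_l by lra.
  assert (C <= Rabs C) by apply RRle_abs. nra.
Qed.

Lemma term_bound x n : -1/2 <= x <= 3/2 ->
  Rabs (1 / (INR n + 1 + x) - 1 / (INR n + 2 - x)) <= 16 * (1 / (INR n + 1) - 1 / (INR n + 2)).
Proof.
  intros Hx. pose proof (pos_INR n) as Hm. set (m := INR n) in *.
  assert (Hu : 0 < m + 1 + x) by lra. assert (Hv : 0 < m + 2 - x) by lra.
  replace (1 / (m + 1 + x) - 1 / (m + 2 - x)) with ((1 - 2 * x) / ((m + 1 + x) * (m + 2 - x))) by (field; lra).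
  replace (16 * (1 / (m + 1) - 1 / (m + 2))) with (16 / ((m + 1) * (m + 2))) by (field; lra).
  rewrite Rabs_div by nra. rewrite (Rabs_pos_eq ((m + 1 + x) * (m + 2 - x))) by nra.
  apply Rmult_le_reg_r with ((m + 1 + x) * (m + 2 - x)); [nra|].
  unfold Rdiv. rewrite Rmult_assoc, Rinv_l by nra. rewrite Rmult_1_r.
  assert (Rabs (1 - 2 * x) <= 2) by (apply Rabs_le; lra).
  apply Rle_trans with 2; auto.
  assert ((m + 1/2) * (m + 1/2) <= (m + 1 + x) * (m + 2 - x)) by nra.
  replace (16 * / ((m + 1) * (m + 2)) * ((m + 1 + x) * (m + 2 - x))) with
    (2 + (16 * ((m + 1 + x) * (m + 2 - x)) - 2 * ((m + 1) * (m + 2))) * / ((m + 1) * (m + 2))) by (field; nra).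
  assert (0 <= (16 * ((m + 1 + x) * (m + 2 - x)) - 2 * ((m + 1) * (m + 2))) * / ((m + 1) * (m + 2))).
  { apply Rmult_le_pos; [nra|left; apply Rinv_0_lt_compat; nra]. }
  lra.
Qed.

Lemma SN_tail x N k : -1/2 <= x <= 3/2 ->
  Rabs (SN (N + k) x - SN N x) <= 16 * (1 / (INR N + 1) - 1 / (INR (N + k) + 1)).
Proof.
  intros Hx. induction k.
  - rewrite Nat.add_0_r, Rminus_diag, Rabs_R0, Rminus_diag. lra.
  - replace (N + S k)%nat with (S (N + k)) by lia. simpl SN.
    replace (SN (N + k) x + (1 / (INR (N + k) + 1 + x) - 1 / (INR (N + k) + 2 - x)) - SN N x)
      with ((SN (N + k) x - SN N x) + (1 / (INR (N + k) + 1 + x) - 1 / (INR (N + k) + 2 - x))) by ring.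
    eapply Rle_trans; [apply Rabs_triang|].
    pose proof (term_bound x (N + k) Hx).
    rewrite S_INR. replace (INR (N + k) + 1 + 1) with (INR (N + k) + 2) by ring. lra.
Qed.

Lemma SN_cauchy x N M : -1/2 <= x <= 3/2 -> (N <= M)%nat -> Rabs (SN M x - SN N x) <= 16 / (INR N + 1).
Proof.
  intros Hx HNM. replace M with (N + (M - N))%nat by lia.
  eapply Rle_trans; [apply SN_tail; auto|].
  pose proof (pos_INR (N + (M - N))). pose proof (pos_INR N).
  assert (0 < 1 / (INR (N + (M - N)) + 1)) by (apply Rdiv_lt_0_compat; lra).
  unfold Rdiv. lra.
Qed.

Definition Sf x := real (Lim_seq (fun N => SN N x)).

Lemma Sf_lim x : -1/2 <= x <= 3/2 -> is_lim_seq (fun N => SN N x) (Sf x).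
Proof.
  intros Hx.
  assert (Hc : ex_finite_lim_seq (fun N => SN N x)).
  2:{ destruct Hc as [l Hl]. unfold Sf. rewrite (is_lim_seq_unique _ _ Hl). simpl. auto. }
  apply ex_lim_seq_cauchy_corr.
  intros eps. destruct (arch 32 eps (cond_pos eps)) as [N0 HN0].
  exists N0. intros n m Hn Hm.
  pose proof (SN_cauchy x N0 n Hx Hn). pose proof (SN_cauchy x N0 m Hx Hm).
  replace (SN n x - SN m x) with ((SN n x - SN N0 x) - (SN m x - SN N0 x)) by ring.
  eapply Rle_lt_trans; [apply Rabs_triang|]. rewrite Rabs_Ropp.
  replace (32 / (INR N0 + 1)) with (16 / (INR N0 + 1) + 16 / (INR N0 + 1)) in HN0 by (pose proof (pos_INR N0); field; lra).
  lra.
Qed.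

Lemma Sf_approx x N : -1/2 <= x <= 3/2 -> Rabs (Sf x - SN N x) <= 16 / (INR N + 1).
Proof.
  intros Hx. destruct (Rle_dec (Rabs (Sf x - SN N x)) (16 / (INR N + 1))) as [H|H]; auto.
  exfalso. apply Rnot_le_lt in H.
  set (d := Rabs (Sf x - SN N x) - 16 / (INR N + 1)).
  assert (Hd : 0 < d) by (unfold d; lra).
  pose proof (Sf_lim x Hx) as L. apply is_lim_seq_spec in L.
  destruct (L (mkposreal _ Hd)) as [M0 HM0]. simpl in HM0.
  specialize (HM0 (Nat.max N M0) ltac:(lia)).
  pose proof (SN_cauchy x N (Nat.max N M0) Hx ltac:(lia)).
  assert (Rabs (Sf x - SN N x) <= Rabs (SN (Nat.max N M0) x - Sf x) + Rabs (SN (Nat.max N M0) x - SN N x)).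
  { replace (Sf x - SN N x) with (- (SN (Nat.max N M0) x - Sf x) + (SN (Nat.max N M0) x - SN N x)) by ring.
    eapply Rle_trans; [apply Rabs_triang|]. rewrite Rabs_Ropp. lra. }
  unfold d in HM0. lra.
Qed.

Lemma approx_eq_nat A B C : (forall N, Rabs (A - B) <= C / (INR N + 1)) -> A = B.
Proof.
  intros H. destruct (Req_dec A B) as [|Hne]; auto. exfalso.
  assert (Hp : 0 < Rabs (A - B)) by (apply Rabs_pos_lt; lra).
  destruct (arch C _ Hp) as [N HN]. specialize (H N). lra.
Qed.

Lemma Hv_Sf a : 0 < a -> Hv a = Sf (x0 a).
Proof.
  intros ha. pose proof (pb a ha). apply approx_eq_nat with 17. intros N.
  pose proof (H_approx a ha N). pose proof (Sf_approx (x0 a) N ltac:(lra)).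
  replace (Hv a - Sf (x0 a)) with ((Hv a - SN N (x0 a)) - (Sf (x0 a) - SN N (x0 a))) by ring.
  eapply Rle_trans; [apply Rabs_triang|]. rewrite Rabs_Ropp.
  replace (17 / (INR N + 1)) with (1 / (INR N + 1) + 16 / (INR N + 1)) by (pose proof (pos_INR N); field; lra).
  lra.
Qed.

Lemma SN_lim N c : 0 <= c <= 1 -> is_lim (SN N) c (SN N c).
Proof.
  intros Hc. induction N.
  - simpl. apply lim_const.
  - simpl. pose proof (pos_INR N).
    apply is_lim_plus'; auto. apply is_lim_minus'.
    + apply lim_div; [apply lim_const| |lra].
      apply (is_lim_plus' (fun _ => INR N + 1) (fun x => x)); [apply lim_const|apply lim_id].
    + apply lim_div; [apply lim_const| |lra].
      apply (is_lim_minus' (fun _ => INR N + 2) (fun x => x)); [apply lim_const|apply lim_id].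
Qed.

Lemma Sf_cont c : 0 <= c <= 1 -> continuity_pt Sf c.
Proof.
  intros Hc. unfold continuity_pt, continue_in, limit1_in, limit_in; simpl; unfold R_dist.
  intros eps He.
  destruct (arch 48 eps He) as [N HN].
  assert (He3 : 0 < eps / 3) by lra.
  destruct (lim_eps (SN N) c (SN N c) (SN_lim N c Hc) (eps / 3) He3) as [d [Hd L]].
  exists (Rmin d (1/2)); split; [apply Rmin_pos; lra|].
  intros x [_ Hx].
  assert (Hx1 : Rabs (x - c) < d) by (eapply Rlt_le_trans; [apply Hx|apply Rmin_l]).
  assert (Hx2 : Rabs (x - c) < 1/2) by (eapply Rlt_le_trans; [apply Hx|apply Rmin_r]).
  apply abslt in Hx2.
  pose proof (Sf_approx x N ltac:(lra)) as A1. pose proof (Sf_approx c N ltac:(lra)) as A2.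
  assert (A3 : Rabs (SN N x - SN N c) <= eps / 3).
  { destruct (Req_dec x c) as [->|Hne]. rewrite Rminus_diag, Rabs_R0; lra. left; apply L; auto. }
  replace (48 / (INR N + 1)) with (3 * (16 / (INR N + 1))) in HN by (pose proof (pos_INR N); field; lra).
  apply absle in A1. apply absle in A2. apply absle in A3. apply Rabs_def1; lra.
Qed.

Lemma SN_0 N : SN N 0 = 1 - 1 / (INR N + 1).
Proof.
  induction N.
  - simpl. field.
  - simpl SN. rewrite IHN, S_INR. pose proof (pos_INR N). field. lra.
Qed.

Lemma SN_1 N : SN N 1 = - (1 - 1 / (INR N + 1)).
Proof.
  induction N.
  - simpl. field.
  - simpl SN. rewrite IHN, S_INR. pose proof (pos_INR N). field. lra.
Qed.

Lemma Sf_0 : Sf 0 = 1.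
Proof.
  apply approx_eq_nat with 17. intros N. pose proof (Sf_approx 0 N ltac:(lra)) as A. rewrite SN_0 in A.
  pose proof (pos_INR N). assert (0 < 1 / (INR N + 1)) by (apply Rdiv_lt_0_compat; lra).
  replace (17 / (INR N + 1)) with (16 / (INR N + 1) + 1 / (INR N + 1)) by (field; lra).
  apply absle in A. apply Rabs_le. lra.
Qed.

Lemma Sf_1 : Sf 1 = -1.
Proof.
  apply approx_eq_nat with 17. intros N. pose proof (Sf_approx 1 N ltac:(lra)) as A. rewrite SN_1 in A.
  pose proof (pos_INR N). assert (0 < 1 / (INR N + 1)) by (apply Rdiv_lt_0_compat; lra).
  replace (17 / (INR N + 1)) with (16 / (INR N + 1) + 1 / (INR N + 1)) by (field; lra).
  apply absle in A. apply Rabs_le. lra.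
Qed.

Lemma SN_FE x N : 0 < x < 1 ->
  SN N (x / 2) + SN N ((x + 1) / 2) = 2 * SN (2 * N) x - 2 / (1 + x) + 2 / (2 - x)
     + 2 / (2 * INR N + 1 + x) - 2 / (2 * INR N + 2 - x).
Proof.
  intros Hx. induction N.
  - simpl. field. lra.
  - replace (2 * S N)%nat with (S (S (2 * N))) by lia. cbn [SN].
    rewrite !S_INR, mult_INR. simpl (INR 2). pose proof (pos_INR N).
    replace (SN N (x / 2) + (1 / (INR N + 1 + x / 2) - 1 / (INR N + 2 - x / 2)) +
      (SN N ((x + 1) / 2) + (1 / (INR N + 1 + (x + 1) / 2) - 1 / (INR N + 2 - (x + 1) / 2))))
    with ((SN N (x / 2) + SN N ((x + 1) / 2)) + (1 / (INR N + 1 + x / 2) - 1 / (INR N + 2 - x / 2)) +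
      (1 / (INR N + 1 + (x + 1) / 2) - 1 / (INR N + 2 - (x + 1) / 2))) by ring.
    rewrite IHN. field. repeat split; lra.
Qed.

Lemma Sf_FE x : 0 < x < 1 -> Sf (x / 2) + Sf ((x + 1) / 2) = 2 * Sf x + 2 / (2 - x) - 2 / (1 + x).
Proof.
  intros Hx. apply approx_eq_nat with 100. intros N.
  pose proof (pos_INR N) as HN.
  pose proof (Sf_approx (x / 2) N ltac:(lra)) as A1.
  pose proof (Sf_approx ((x + 1) / 2) N ltac:(lra)) as A2.
  pose proof (Sf_approx x (2 * N) ltac:(lra)) as A3.
  pose proof (SN_FE x N Hx) as E.
  rewrite mult_INR in A3. replace (INR 2) with 2 in A3 by (simpl; lra).
  assert (B3 : 16 / (2 * INR N + 1) <= 16 / (INR N + 1)).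
  { apply Rmult_le_compat_l; [lra|]. apply Rinv_le_contravar; lra. }
  assert (B4 : 0 < 2 / (2 * INR N + 1 + x) <= 2 / (INR N + 1)).
  { split. apply Rdiv_lt_0_compat; lra. apply Rmult_le_compat_l; [lra|]. apply Rinv_le_contravar; lra. }
  assert (B5 : 0 < 2 / (2 * INR N + 2 - x) <= 2 / (INR N + 1)).
  { split. apply Rdiv_lt_0_compat; lra. apply Rmult_le_compat_l; [lra|]. apply Rinv_le_contravar; lra. }
  replace (100 / (INR N + 1)) with (6 * (16 / (INR N + 1)) + 2 * (2 / (INR N + 1))) by (field; lra).
  apply absle in A1. apply absle in A2. apply absle in A3.
  apply Rabs_le. lra.
Qed.

Lemma sin_bds z : 0 <= z <= 1 -> z - z^3/6 <= sin z <= z - z^3/6 + z^5/120.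
Proof.
  intros Hz. pose proof PI2_3_2. destruct (sin_bound z 0) as [H1 H2]; try lra.
  unfold sin_approx, sin_term in H1, H2. simpl in H1, H2. split; lra.
Qed.

Lemma cos_bds z : 0 <= z <= 1 -> 1 - z^2/2 <= cos z <= 1 - z^2/2 + z^4/24.
Proof.
  intros Hz. pose proof PI2_3_2. destruct (cos_bound z 0) as [H1 H2]; try lra.
  unfold cos_approx, cos_term in H1, H2. simpl in H1, H2. split; lra.
Qed.

Lemma cot_bd_pos z : 0 < z <= 1 -> Rabs (cos z / sin z - 1 / z) <= z.
Proof.
  intros Hz. destruct (sin_bds z ltac:(lra)) as [S1 S2]. destruct (cos_bds z ltac:(lra)) as [C1 C2].
  assert (Hs : 5 * z / 6 <= sin z) by nra.
  assert (Hs0 : 0 < sin z) by nra.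
  replace (cos z / sin z - 1 / z) with ((z * cos z - sin z) / (z * sin z)) by (field; lra).
  assert (N1 : - (z^3 / 2) <= z * cos z - sin z) by nra.
  assert (N2 : z * cos z - sin z <= 0) by nra.
  rewrite Rabs_div by nra. rewrite Rabs_left1 by lra. rewrite Rabs_pos_eq by nra.
  apply Rmult_le_reg_r with (z * sin z); [nra|]. unfold Rdiv. rewrite Rmult_assoc, Rinv_l by nra.
  nra.
Qed.

Lemma cot_bd z : 0 < Rabs z <= 1 -> Rabs (cos z / sin z - 1 / z) <= Rabs z.
Proof.
  intros Hz. destruct (Rle_lt_dec 0 z).
  - rewrite (Rabs_pos_eq z) in Hz by lra. rewrite (Rabs_pos_eq z) by lra. apply cot_bd_pos; lra.
  - rewrite (Rabs_left z) in Hz by lra. rewrite (Rabs_left z) by lra.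
    replace (cos z / sin z - 1 / z) with (- (cos (- z) / sin (- z) - 1 / (- z))).
    + rewrite Rabs_Ropp. apply cot_bd_pos; lra.
    + rewrite cos_neg, sin_neg. assert (sin z <> 0).
      { intro E. assert (0 < sin (- z)) by (apply sin_gt_0; pose proof PI2_3_2; lra). rewrite sin_neg in H. lra. }
      field. lra.
Qed.

Lemma sin_nz z : 0 < Rabs z <= 1 -> sin z <> 0.
Proof.
  intros Hz. pose proof PI2_3_2. destruct (Rle_lt_dec 0 z).
  - rewrite (Rabs_pos_eq z) in Hz by lra. assert (0 < sin z) by (apply sin_gt_0; lra). lra.
  - rewrite (Rabs_left z) in Hz by lra. assert (0 < sin (- z)) by (apply sin_gt_0; lra).
    rewrite sin_neg in H0. lra.
Qed.

Definition Tf x := if Req_EM_T x 0 then 1 else if Req_EM_T x 1 then -1 else PI * cot (PI * x) + 1 / (1 - x) - 1 / x.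

Lemma Tf_cont0 : continuity_pt Tf 0.
Proof.
  unfold continuity_pt, continue_in, limit1_in, limit_in; simpl; unfold R_dist.
  intros eps He. pose proof PI_4. pose proof PI_RGT_0.
  exists (Rmin (eps / 20) (1/4)). split; [apply Rmin_pos; lra|].
  intros x [_ Hx]. rewrite Rminus_0_r in Hx.
  assert (Hx1 : Rabs x < eps / 20) by (eapply Rlt_le_trans; [apply Hx|apply Rmin_l]).
  assert (Hx2 : Rabs x < 1/4) by (eapply Rlt_le_trans; [apply Hx|apply Rmin_r]).
  unfold Tf at 2. destruct (Req_EM_T 0 0); [|lra].
  unfold Tf. destruct (Req_EM_T x 0) as [->|Hx0]. { rewrite Rminus_diag, Rabs_R0; auto. }
  destruct (Req_EM_T x 1) as [|Hx1']. { apply abslt in Hx2; lra. }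
  assert (Hax : 0 < Rabs x) by (apply Rabs_pos_lt; auto).
  assert (Hz : 0 < Rabs (PI * x) <= 1).
  { rewrite Rabs_mult, (Rabs_pos_eq PI) by lra. split; nra. }
  pose proof (cot_bd (PI * x) Hz) as B. unfold cot.
  replace (PI * (cos (PI * x) / sin (PI * x)) + 1 / (1 - x) - 1 / x - 1)
    with (PI * (cos (PI * x) / sin (PI * x) - 1 / (PI * x)) + x / (1 - x)).
  2:{ apply abslt in Hx2. pose proof (sin_nz _ Hz). field. repeat split; auto; try lra. }
  eapply Rle_lt_trans; [apply Rabs_triang|].
  rewrite Rabs_mult, (Rabs_pos_eq PI) by lra. rewrite Rabs_mult, (Rabs_pos_eq PI) in B by lra.
  assert (Hq : Rabs (x / (1 - x)) <= 2 * Rabs x).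
  { apply abslt in Hx2. rewrite Rabs_div by lra. rewrite (Rabs_pos_eq (1 - x)) by lra.
    apply Rmult_le_reg_r with (1 - x); [lra|]. unfold Rdiv. rewrite Rmult_assoc, Rinv_l by lra.
    pose proof (Rabs_pos x). nra. }
  assert (PI * Rabs (cos (PI * x) / sin (PI * x) - 1 / (PI * x)) <= 16 * Rabs x).
  { apply Rle_trans with (PI * (PI * Rabs x)). apply Rmult_le_compat_l; lra. assert (PI * PI <= 16) by nra. pose proof (Rabs_pos x). nra. }
  lra.
Qed.

Lemma Tf_sym x : Tf (1 - x) = - Tf x.
Proof.
  unfold Tf. destruct (Req_EM_T x 0) as [->|H0].
  - destruct (Req_EM_T (1 - 0) 0); [lra|]. destruct (Req_EM_T (1 - 0) 1); [lra|lra].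
  - destruct (Req_EM_T x 1) as [->|H1].
    + destruct (Req_EM_T (1 - 1) 0); [lra|lra].
    + destruct (Req_EM_T (1 - x) 0); [lra|]. destruct (Req_EM_T (1 - x) 1); [lra|].
      unfold cot. replace (PI * (1 - x)) with (PI - PI * x) by ring.
      rewrite sin_PI_x. rewrite cos_minus, cos_PI, sin_PI.
      replace (1 - (1 - x)) with x by ring.
      unfold Rdiv. ring.
Qed.

Lemma Tf_cont1 : continuity_pt Tf 1.
Proof.
  apply continuity_pt_ext_loc with (f := fun x => - Tf (1 - x)).
  - apply filter_forall. intros y. rewrite Tf_sym. ring.
  - apply (continuity_pt_comp (fun x => 1 - x) (fun y => - Tf y)).
    + apply continuity_pt_minus. apply continuity_pt_const. intros u v; auto. apply continuity_pt_id.
    + replace (1 - 1) with 0 by ring. apply continuity_pt_opp. apply Tf_cont0.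
Qed.

Lemma Tf_cont c : 0 <= c <= 1 -> continuity_pt Tf c.
Proof.
  intros Hc. destruct (Req_EM_T c 0) as [->|H0]; [apply Tf_cont0|].
  destruct (Req_EM_T c 1) as [->|H1]; [apply Tf_cont1|].
  pose proof PI_RGT_0.
  assert (Hd : 0 < Rmin c (1 - c)) by (apply Rmin_pos; lra).
  apply continuity_pt_ext_loc with (f := fun x => PI * (cos (PI * x) / sin (PI * x)) + 1 / (1 - x) - 1 / x).
  - exists (mkposreal _ Hd). intros y Hy. simpl in Hy.
    unfold ball in Hy; simpl in Hy; unfold AbsRing_ball, abs, minus, plus, opp in Hy; simpl in Hy.
    assert (Rmin c (1 - c) <= c) by apply Rmin_l. assert (Rmin c (1 - c) <= 1 - c) by apply Rmin_r.
    apply abslt in Hy.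
    unfold Tf. destruct (Req_EM_T y 0); [lra|]. destruct (Req_EM_T y 1); [lra|]. unfold cot. auto.
  - apply continuity_pt_filterlim.
    apply (ex_derive_continuous (fun x => PI * (cos (PI * x) / sin (PI * x)) + 1 / (1 - x) - 1 / x)).
    assert (0 < sin (PI * c)) by (apply sin_gt_0; nra).
    auto_derive. repeat split; lra.
Qed.

Lemma Tf_FE x : 0 < x < 1 -> Tf (x / 2) + Tf ((x + 1) / 2) = 2 * Tf x + 2 / (2 - x) - 2 / (1 + x).
Proof.
  intros Hx. pose proof PI_RGT_0. unfold Tf.
  destruct (Req_EM_T (x/2) 0); [lra|]. destruct (Req_EM_T (x/2) 1); [lra|].
  destruct (Req_EM_T ((x+1)/2) 0); [lra|]. destruct (Req_EM_T ((x+1)/2) 1); [lra|].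
  destruct (Req_EM_T x 0); [lra|]. destruct (Req_EM_T x 1); [lra|].
  unfold cot. set (z := PI * x / 2).
  replace (PI * (x / 2)) with z by (unfold z; field).
  replace (PI * ((x + 1) / 2)) with (z + PI / 2) by (unfold z; field).
  replace (PI * x) with (2 * z) by (unfold z; field).
  rewrite cos_plus, sin_plus, cos_PI2, sin_PI2, sin_2a, cos_2a.
  assert (0 < sin z) by (apply sin_gt_0; unfold z; nra).
  assert (0 < cos z) by (apply cos_gt_0; unfold z; nra).
  field. repeat split; lra.
Qed.

Lemma herg D : (forall c, 0 <= c <= 1 -> continuity_pt D c) -> D 0 = 0 -> D 1 = 0 ->
  (forall x, 0 < x < 1 -> D (x / 2) + D ((x + 1) / 2) = 2 * D x) ->
  forall x, 0 <= x <= 1 -> D x <= 0.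
Proof.
  intros Hc H0 H1 HF.
  destruct (continuity_ab_maj D 0 1 ltac:(lra) Hc) as [m [Hm Hm01]].
  intros x Hx. apply Rle_trans with (D m); [apply Hm; auto|].
  destruct (Rle_dec (D m) 0) as [|Hpos]; auto. exfalso. apply Rnot_le_lt in Hpos.
  assert (Hm0 : m <> 0) by (intro; subst; lra). assert (Hm1 : m <> 1) by (intro; subst; lra).
  assert (Hit : forall n, D (m / 2 ^ n) = D m /\ 0 < m / 2 ^ n < 1).
  { induction n.
    - simpl. unfold Rdiv. rewrite Rinv_1, Rmult_1_r. split; auto. lra.
    - destruct IHn as [E B]. pose proof (HF _ B) as F.
      assert (D (m / 2 ^ n / 2) <= D m) by (apply Hm; lra).
      assert (D ((m / 2 ^ n + 1) / 2) <= D m) by (apply Hm; lra).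
      replace (m / 2 ^ S n) with (m / 2 ^ n / 2) by (simpl; field; apply pow_nonzero; lra).
      split; [lra|lra]. }
  destruct (Hc 0 ltac:(lra) (D m) Hpos) as [d [Hd Hdel]].
  destruct (arch 1 d Hd) as [N HN].
  specialize (Hit N). destruct Hit as [E B].
  assert (Hpow : INR N + 1 <= 2 ^ N).
  { clear. induction N. simpl; lra. rewrite S_INR. simpl. pose proof (pos_INR N). lra. }
  assert (m / 2 ^ N <= 1 / (INR N + 1)).
  { pose proof (pos_INR N). unfold Rdiv. apply Rmult_le_compat; try lra.
    left; apply Rinv_0_lt_compat; apply pow_lt; lra.
    apply Rinv_le_contravar; lra. }
  specialize (Hdel (m / 2 ^ N)). simpl in Hdel. unfold R_dist in Hdel.
  rewrite H0, E, Rminus_0_r, Rminus_0_r, Rabs_pos_eq, Rabs_pos_eq in Hdel by lra.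
  assert (D m < D m); [|lra]. apply Hdel. split; [split; [exact I|lra]|lra].
Qed.

Lemma Sf_Tf x : 0 < x < 1 -> Sf x = Tf x.
Proof.
  intros Hx.
  set (D := fun y => Sf y - Tf y).
  assert (Hc : forall c, 0 <= c <= 1 -> continuity_pt D c).
  { intros c Hc. apply continuity_pt_minus. apply Sf_cont; auto. apply Tf_cont; auto. }
  assert (HD0 : D 0 = 0).
  { unfold D. rewrite Sf_0. unfold Tf. destruct (Req_EM_T 0 0); [lra|lra]. }
  assert (HD1 : D 1 = 0).
  { unfold D. rewrite Sf_1. unfold Tf. destruct (Req_EM_T 1 0); [lra|]. destruct (Req_EM_T 1 1); lra. }
  assert (HF : forall y, 0 < y < 1 -> D (y / 2) + D ((y + 1) / 2) = 2 * D y).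
  { intros y Hy. unfold D. pose proof (Sf_FE y Hy). pose proof (Tf_FE y Hy). lra. }
  assert (A1 := herg D Hc HD0 HD1 HF x ltac:(lra)).
  assert (A2 := herg (fun y => - D y)).
  assert (- D x <= 0).
  { apply A2; try lra.
    - intros c Hc'. apply continuity_pt_opp. auto.
    - intros y Hy. specialize (HF y Hy). lra. }
  unfold D in *. lra.
Qed.

Lemma Hv_val a : 0 < a -> Hv a = PI * cot (PI * x0 a) + 1 / (1 - x0 a) - 1 / x0 a.
Proof.
  intros ha. pose proof (pb a ha). rewrite Hv_Sf, Sf_Tf by (auto; lra).
  unfold Tf. destruct (Req_EM_T (x0 a) 0); [lra|]. destruct (Req_EM_T (x0 a) 1); [lra|]. auto.
Qed.

Lemma int_left a : 0 < a -> is_RInt (f_a a) 0 (x0 a) (RInt (Gc a) 0 (x0 a)).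
Proof.
  intros ha. pose proof (pb a ha).
  apply (is_RInt_ext (Gc a)).
  - rewrite Rmin_left, Rmax_right by lra. intros x Hx. unfold Gc, f_a.
    rewrite clamp_id by lra. destruct (Rle_dec x (x0 a)); [|lra]. reflexivity.
  - apply (RInt_correct (V := R_CompleteNormedModule)). apply Gc_ex; auto.
Qed.

Lemma int_right a : 0 < a -> is_RInt (f_a a) (x0 a) 1 (RInt (Lc a) (x0 a) 1).
Proof.
  intros ha. pose proof (pb a ha).
  apply (is_RInt_ext (Lc a)).
  - rewrite Rmin_left, Rmax_right by lra. intros x Hx. unfold Lc, f_a.
    rewrite clamp_id by lra. destruct (Rle_dec x (x0 a)); [lra|]. reflexivity.
  - apply (RInt_correct (V := R_CompleteNormedModule)). apply Lc_ex; auto.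
Qed.

Lemma rint_eq (f : R -> R) u v (l l' : R) : is_RInt f u v l -> l = l' -> is_RInt f u v l'.
Proof. intros H ->; auto. Qed.

Theorem proposition7 (a : R) (ha : 0 < a) :
  is_RInt (f_a a) 0 1
    (1 / (1 + a) * (1 - a * PI / (a + 1) * cot (a * PI / (a + 1)))) /\
  is_RInt (f_a a) 0 (a / (a + 1))
    (1 / (2 * (1 + a) ^ 2) * (1 + a + a ^ 2 - a * PI * cot (a * PI / (a + 1)))).
Proof.
  pose proof (I2_val a ha) as E2. pose proof (J_val a ha) as EJ. pose proof (Hv_val a ha) as EH.
  pose proof (int_left a ha) as IL. pose proof (int_right a ha) as IR.
  rewrite E2 in IL. rewrite EJ in IR. rewrite EH in IL, IR.
  replace (PI * x0 a) with (a * PI / (a + 1)) in IL, IR by (unfold x0; field; lra).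
  set (c := cot (a * PI / (a + 1))) in *.
  unfold Q1 in IL, IR. split.
  - pose proof (is_RInt_Chasles _ _ _ _ _ _ IL IR) as I.
    apply (rint_eq _ _ _ _ _ I). unfold plus; simpl. unfold x0. field. lra.
  - apply (rint_eq _ _ _ _ _ IL). unfold x0. field. lra.
Qed.
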